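(* Let $\mathbf e=(e_1,\ldots,e_r)\in\mathbb{Z}^r$ and let $J_{\mathbf e}$ be the associated Jordan totient quotient of weight $w=\sum_i ie_i$. For every real $\beta$ there is a constant $C(\mathbf e,\beta)$ such that for $x\ge2$ \[ \sum_{n\le x}J_{\mathbf e}(n)n^\beta=\mathfrak{S}_{\mathbf e}M_{\beta+w}(x)+C(\mathbf e,\beta)+O_{\mathbf e,\beta}\big(x^{\beta+w}(\log x)^{|e_1|}\big). \]
   Context: $p$ denotes a prime. For $k\ge1$, $J_k(n)=n^k\prod_{p\mid n}(1-p^{-k})$. For $\mathbf e\in\mathbb{Z}^r$, $J_{\mathbf e}(n)=\prod_{i=1}^rJ_i(n)^{e_i}$, with weight $w=\sum_i ie_i$, and $\mathfrak{S}_{\mathbf e}=\prod_p\left(1+\frac{J_{\mathbf e}(p)p^{-w}-1}{p}\right)$. For real $\gamma$, $M_\gamma(x)=x^{\gamma+1}/(\gamma+1)$ if $\gamma\ne-1$ and $M_{-1}(x)=\log x$. *)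

(* Defs.v *)
From Stdlib Require Import Reals Lra Lia ZArith Arith List Znumtheory Bool.
Open Scope R_scope.

Definition primeb (p : nat) : bool :=
  if prime_dec (Z.of_nat p) then true else false.

Fixpoint sum1 (N : nat) (f : nat -> R) : R :=
  match N with
  | O => 0
  | S m => sum1 m f + f (S m)
  end.

Fixpoint prod1 (N : nat) (f : nat -> R) : R :=
  match N with
  | O => 1
  | S m => prod1 m f * f (S m)
  end.

Definition Jordan (k n : nat) : R :=
  INR n ^ k *
  prod1 n (fun p => if andb (primeb p) (Nat.eqb (n mod p) 0)
                    then 1 - / (INR p ^ k) else 1).

(* e = [e_1; ...; e_r]; J_e(n) = prod_{i=1}^r J_i(n)^{e_i} *)
Definition ecoef (e : list Z) (i : nat) : Z := nth (i - 1) e 0%Z.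

Definition JordanQ (e : list Z) (n : nat) : R :=
  prod1 (length e) (fun i => powerRZ (Jordan i n) (ecoef e i)).

Definition weight (e : list Z) : Z :=
  fold_right Z.add 0%Z (map (fun i => Z.of_nat i * ecoef e i)%Z (seq 1 (length e))).

Definition SingPartial (e : list Z) (N : nat) : R :=
  prod1 N (fun p => if primeb p
                    then 1 + (JordanQ e p * powerRZ (INR p) (- weight e) - 1) / INR p
                    else 1).

Definition Mfun (g x : R) : R :=
  if Req_EM_T g (-1) then ln x else Rpower x (g + 1) / (g + 1).

Definition sum_le (x : R) (f : nat -> R) : R :=
  sum1 (Z.to_nat (Int_part x)) f.

(* Main.v *)
Require Import Defs.
From Stdlib Require Import Reals ZArith List.
From Stdlib Require Import Lra Lia Znumtheory Bool Classical.
Open Scope R_scope.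

Lemma sum1_ext N f g : (forall n, (1 <= n <= N)%nat -> f n = g n) -> sum1 N f = sum1 N g.
Proof. induction N; intros H; simpl; auto. rewrite IHN by (intros; apply H; lia). rewrite H by lia; auto. Qed.
Lemma sum1_plus N f g : sum1 N (fun n => f n + g n) = sum1 N f + sum1 N g.
Proof. induction N; simpl; [lra|rewrite IHN; lra]. Qed.
Lemma sum1_scal N c f : sum1 N (fun n => c * f n) = c * sum1 N f.
Proof. induction N; simpl; [lra|rewrite IHN; lra]. Qed.
Lemma sum1_le N f g : (forall n, (1 <= n <= N)%nat -> f n <= g n) -> sum1 N f <= sum1 N g.
Proof. induction N; intros H; simpl; [lra|]. pose proof (H (S N) ltac:(lia)). pose proof (IHN ltac:(intros; apply H; lia)). lra. Qed.
Lemma sum1_abs N f : Rabs (sum1 N f) <= sum1 N (fun n => Rabs (f n)).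
Proof. induction N; simpl. rewrite Rabs_R0; lra. eapply Rle_trans. apply Rabs_triang. lra. Qed.
Lemma sum1_mono_N N M f : (N <= M)%nat -> (forall n, 0 <= f n) -> sum1 N f <= sum1 M f.
Proof. intros H Hf. induction H; simpl; [lra|]. specialize (Hf (S m)); lra. Qed.
Lemma sum1_zero N : sum1 N (fun _ => 0) = 0.
Proof. induction N; simpl; auto. rewrite IHN; lra. Qed.
Lemma sum1_nonneg N f : (forall n, (1 <= n <= N)%nat -> 0 <= f n) -> 0 <= sum1 N f.
Proof. intros H. rewrite <- (sum1_zero N). apply sum1_le; auto. Qed.

Lemma prod1_ext N f g : (forall n, (1 <= n <= N)%nat -> f n = g n) -> prod1 N f = prod1 N g.
Proof. induction N; intros H; simpl; auto. rewrite IHN by (intros; apply H; lia). rewrite H by lia; auto. Qed.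
Lemma prod1_mult N f g : prod1 N (fun n => f n * g n) = prod1 N f * prod1 N g.
Proof. induction N; simpl; [lra|rewrite IHN; ring]. Qed.
Lemma prod1_one N : prod1 N (fun _ => 1) = 1.
Proof. induction N; simpl; auto. rewrite IHN; ring. Qed.
Lemma prod1_swap r n (f : nat -> nat -> R) :
  prod1 r (fun i => prod1 n (fun p => f i p)) = prod1 n (fun p => prod1 r (fun i => f i p)).
Proof. induction r; simpl. symmetry; apply prod1_one. rewrite IHr. rewrite <- prod1_mult. reflexivity. Qed.
Lemma prod1_nonneg N f : (forall n, (1 <= n <= N)%nat -> 0 <= f n) -> 0 <= prod1 N f.
Proof. induction N; intros H; simpl; [lra|]. apply Rmult_le_pos; [apply IHN; intros; apply H; lia| apply H; lia]. Qed.
Lemma prod1_le N f g : (forall n, (1 <= n <= N)%nat -> 0 <= f n <= g n) -> prod1 N f <= prod1 N g.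
Proof. induction N; intros H; simpl; [lra|].
  assert (0 <= prod1 N f) by (apply prod1_nonneg; intros; apply H; lia).
  pose proof (IHN ltac:(intros; apply H; lia)). pose proof (H (S N) ltac:(lia)).
  apply Rmult_le_compat; lra. Qed.
Lemma prod1_neq0 N f : (forall n, (1 <= n <= N)%nat -> f n <> 0) -> prod1 N f <> 0.
Proof. induction N; intros H; simpl; [lra|]. apply Rmult_integral_contrapositive; split; [apply IHN; intros; apply H; lia| apply H; lia]. Qed.
Lemma powerRZ_prod1 N f z :
  powerRZ (prod1 N f) z = prod1 N (fun n => powerRZ (f n) z).
Proof. induction N; simpl. apply powerRZ_R1.
  rewrite powerRZ_mult, IHN; reflexivity. Qed.

Definition prodL (l : list nat) (f : nat -> R) : R := fold_right (fun p acc => f p * acc) 1 l.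
Definition prodn (l : list nat) : nat := fold_right Nat.mul 1%nat l.
Fixpoint SS (Q : list nat) (f : list nat -> R) : R :=
  match Q with nil => f nil | q :: Q' => SS Q' f + SS Q' (fun S => f (q :: S)) end.
Inductive sub : list nat -> list nat -> Prop :=
 | sub_nil : sub nil nil
 | sub_skip S Q q : sub S Q -> sub S (q :: Q)
 | sub_take S Q q : sub S Q -> sub (q :: S) (q :: Q).

Lemma SS_ext Q f g : (forall S, sub S Q -> f S = g S) -> SS Q f = SS Q g.
Proof. revert f g; induction Q; intros f g H; simpl; [apply H; constructor|].
  f_equal; apply IHQ; intros; apply H; [apply sub_skip|apply sub_take]; auto. Qed.
Lemma SS_le Q f g : (forall S, sub S Q -> f S <= g S) -> SS Q f <= SS Q g.
Proof. revert f g; induction Q; intros f g H; simpl; [apply H; constructor|].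
  apply Rplus_le_compat; apply IHQ; intros; apply H; [apply sub_skip|apply sub_take]; auto. Qed.
Lemma SS_plus Q f g : SS Q (fun S => f S + g S) = SS Q f + SS Q g.
Proof. revert f g; induction Q; intros f g; simpl; auto. rewrite IHQ, IHQ; ring. Qed.
Lemma SS_scal Q c f : SS Q (fun S => c * f S) = c * SS Q f.
Proof. revert f; induction Q; intros f; simpl; auto. rewrite IHQ, IHQ; ring. Qed.
Lemma SS_opp Q f : SS Q (fun S => - f S) = - SS Q f.
Proof. rewrite <- (Rmult_1_l (SS Q f)). rewrite Ropp_mult_distr_l. rewrite <- SS_scal. apply SS_ext; intros; ring. Qed.
Lemma SS_minus Q f g : SS Q (fun S => f S - g S) = SS Q f - SS Q g.
Proof. unfold Rminus. rewrite SS_plus, SS_opp. reflexivity. Qed.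
Lemma SS_abs Q f : Rabs (SS Q f) <= SS Q (fun S => Rabs (f S)).
Proof. revert f; induction Q; intros f; simpl. lra. eapply Rle_trans. apply Rabs_triang.
  apply Rplus_le_compat; apply IHQ. Qed.
Lemma SS_sum1 Q N (f : list nat -> nat -> R) :
  SS Q (fun S => sum1 N (fun n => f S n)) = sum1 N (fun n => SS Q (fun S => f S n)).
Proof. induction N; simpl. clear. induction Q; simpl; auto. rewrite IHQ; lra.
  rewrite SS_plus, IHN; auto. Qed.
Lemma SS_prod Q u : SS Q (fun S => prodL S u) = prodL Q (fun p => 1 + u p).
Proof. induction Q; simpl; auto. rewrite SS_scal, IHQ. ring. Qed.

Lemma sub_in S Q p : sub S Q -> In p S -> In p Q.
Proof. induction 1; simpl; intuition. Qed.
Lemma sub_nodup S Q : sub S Q -> NoDup Q -> NoDup S.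
Proof. induction 1 as [|S Q q Hs IH|S Q q Hs IH]; intros Hn; auto.
  - inversion Hn; subst; auto.
  - inversion Hn; subst. constructor; auto. intro Hin; apply H1; eapply sub_in; eauto. Qed.
Lemma prodL_ext l f g : (forall p, In p l -> f p = g p) -> prodL l f = prodL l g.
Proof. induction l; intros H; simpl; auto. rewrite H by (simpl; auto). rewrite IHl; auto. intros; apply H; simpl; auto. Qed.
Lemma prodL_mult l f g : prodL l (fun p => f p * g p) = prodL l f * prodL l g.
Proof. induction l; simpl; [ring|rewrite IHl; ring]. Qed.
Lemma prodL_nonneg l f : (forall p, In p l -> 0 <= f p) -> 0 <= prodL l f.
Proof. induction l; intros H; simpl; [lra|]. apply Rmult_le_pos; [apply H; simpl; auto| apply IHl; intros; apply H; simpl; auto]. Qed.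
Lemma prodL_le l f g : (forall p, In p l -> 0 <= f p <= g p) -> prodL l f <= prodL l g.
Proof. induction l; intros H; simpl; [lra|].
  assert (0 <= prodL l f) by (apply prodL_nonneg; intros; apply H; simpl; auto).
  pose proof (IHl ltac:(intros; apply H; simpl; auto)). pose proof (H a ltac:(simpl; auto)).
  apply Rmult_le_compat; lra. Qed.
Lemma prodL_abs l f : Rabs (prodL l f) = prodL l (fun p => Rabs (f p)).
Proof. induction l; simpl. apply Rabs_R1. rewrite Rabs_mult, IHl; auto. Qed.
Lemma prodL_pow l f k : prodL l (fun p => f p ^ k) = prodL l f ^ k.
Proof. induction l; simpl. rewrite pow1; auto. rewrite IHl, Rpow_mult_distr; auto. Qed.
Lemma INR_prodn l : INR (prodn l) = prodL l (fun p => INR p).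
Proof. induction l; simpl; auto. rewrite mult_INR, IHl; auto. Qed.
Lemma prodn_pos l : (forall p, In p l -> 1 <= p)%nat -> (1 <= prodn l)%nat.
Proof. induction l; intros H; simpl; auto. assert (1 <= a)%nat by (apply H; simpl; auto).
  assert (1 <= prodn l)%nat by (apply IHl; intros; apply H; simpl; auto). nia. Qed.
Lemma prodL_Rpower l s : (forall p, In p l -> 1 <= p)%nat ->
  prodL l (fun p => Rpower (INR p) s) = Rpower (INR (prodn l)) s.
Proof. induction l; intros H; simpl. unfold Rpower; rewrite ln_1, Rmult_0_r, exp_0; auto.
  rewrite IHl by (intros; apply H; simpl; auto). rewrite mult_INR. apply Rpower_mult_distr.
  assert (1 <= a)%nat by (apply H; simpl; auto). apply lt_0_INR; lia.
  pose proof (prodn_pos l ltac:(intros; apply H; simpl; auto)). apply lt_0_INR; lia. Qed.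

Definition Qs (N : nat) : list nat := filter primeb (seq 1 N).
Lemma prod1_filter N u : prod1 N (fun p => if primeb p then u p else 1) = prodL (Qs N) u.
Proof. unfold Qs. induction N; [simpl; auto|]. rewrite seq_S, filter_app. simpl prod1. rewrite IHN.
  unfold prodL. rewrite fold_right_app. simpl. destruct (primeb (S N)); simpl.
  - generalize (filter primeb (seq 1 N)). intros l. induction l; simpl. ring. rewrite <- IHl. ring.
  - replace (u (S N) * 1) with (u (S N)) by ring. ring_simplify. f_equal. Qed.

Lemma primeb_spec p : primeb p = true <-> prime (Z.of_nat p).
Proof. unfold primeb. destruct (prime_dec (Z.of_nat p)); split; auto; discriminate. Qed.
Lemma primeb_ge2 p : primeb p = true -> (2 <= p)%nat.
Proof. intros H%primeb_spec. apply prime_ge_2 in H. lia. Qed.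
Lemma modZ a b : (1 <= b)%nat -> ((a mod b = 0)%nat <-> (Z.of_nat b | Z.of_nat a)%Z).
Proof. intros Hb. rewrite <- Z.mod_divide by lia. rewrite <- Nat2Z.inj_mod. lia. Qed.
Lemma prime_div_eq p q : primeb p = true -> primeb q = true -> (q mod p = 0)%nat -> p = q.
Proof. intros Hp Hq Hd. pose proof (primeb_ge2 _ Hp). apply modZ in Hd; [|lia].
  apply primeb_spec in Hp, Hq. pose proof (prime_div_prime _ _ Hp Hq Hd). lia. Qed.
Lemma prime_euclid p a b : primeb p = true -> ((a * b) mod p = 0)%nat -> (a mod p = 0 \/ b mod p = 0)%nat.
Proof. intros Hp Hd. pose proof (primeb_ge2 _ Hp). apply modZ in Hd; [|lia].
  rewrite Nat2Z.inj_mul in Hd. apply primeb_spec in Hp. destruct (prime_mult _ Hp _ _ Hd);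
  [left|right]; apply modZ; auto; lia. Qed.
Lemma prime_gauss p m n : primeb p = true -> (1 <= m)%nat -> (n mod p = 0)%nat -> (n mod m = 0)%nat ->
  (m mod p <> 0)%nat -> (n mod (p * m) = 0)%nat.
Proof. intros Hp Hm Hpn Hmn Hpm. pose proof (primeb_ge2 _ Hp).
  apply modZ in Hpn; [|lia]. apply modZ in Hmn; [|lia]. apply modZ; [nia|].
  assert (~ (Z.of_nat p | Z.of_nat m)%Z) by (intro Hc; apply Hpm; apply modZ; auto; lia).
  apply primeb_spec in Hp. pose proof (prime_rel_prime _ Hp _ H0) as Hrel.
  destruct Hmn as [k Hk]. rewrite Hk in Hpn. rewrite Z.mul_comm in Hpn.
  pose proof (Gauss _ _ _ Hpn Hrel) as [j Hj]. exists j. rewrite Nat2Z.inj_mul, Hk, Hj. ring. Qed.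
Lemma mod_trans a b c : (1 <= a)%nat -> (1 <= b)%nat -> (b mod a = 0)%nat -> (c mod b = 0)%nat -> (c mod a = 0)%nat.
Proof. intros Ha Hb H1 H2. apply modZ in H1; auto. apply modZ in H2; auto. apply modZ; auto. eapply Z.divide_trans; eauto. Qed.

Definition allprime (l : list nat) := forall p, In p l -> primeb p = true.

Lemma prodn_not_div p S : primeb p = true -> allprime S -> ~ In p S -> (prodn S mod p <> 0)%nat.
Proof. intros Hp. induction S as [|q S IH]; intros HS Hin; simpl.
  - pose proof (primeb_ge2 _ Hp). rewrite (Nat.mod_small 1 p); lia.
  - intros Hd. apply prime_euclid in Hd; auto. destruct Hd as [Hd|Hd].
    + apply prime_div_eq in Hd; auto. apply Hin; simpl; auto. apply HS; simpl; auto.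
    + apply IH; auto. intros r Hr; apply HS; simpl; auto. intro; apply Hin; simpl; auto. Qed.
Lemma allprime_ge1 S : allprime S -> forall p, In p S -> (1 <= p)%nat.
Proof. intros H p Hp. pose proof (primeb_ge2 _ (H p Hp)). lia. Qed.

Lemma div_prodn S n : NoDup S -> allprime S -> (forall p, In p S -> (n mod p = 0)%nat) -> (n mod prodn S = 0)%nat.
Proof. induction S as [|q S IH]; intros Hnd HS Hd.
  - apply Nat.mod_1_r.
  - inversion Hnd; subst. change (prodn (q :: S)) with (q * prodn S)%nat. apply prime_gauss.
    + apply HS; simpl; auto.
    + apply prodn_pos. apply allprime_ge1. intros r Hr; apply HS; simpl; auto.
    + apply Hd; simpl; auto.
    + apply IH; auto. intros r Hr; apply HS; simpl; auto. intros; apply Hd; simpl; auto.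
    + apply prodn_not_div; auto. apply HS; simpl; auto. intros r Hr; apply HS; simpl; auto. Qed.
Lemma prodn_div S n p : allprime S -> In p S -> (n mod prodn S = 0)%nat -> (n mod p = 0)%nat.
Proof. intros HS Hin Hd. assert (Hp1 : forall r, In r S -> (1 <= r)%nat) by (apply allprime_ge1; auto).
  apply (mod_trans _ (prodn S)); [apply Hp1; auto| apply prodn_pos; auto| |auto].
  clear Hd. induction S as [|q S IH]; simpl in *; [contradiction|]. destruct Hin as [->|Hin].
  - change (prodn (p :: S)) with (p * prodn S)%nat. rewrite Nat.mul_comm, Nat.Div0.mod_mul; auto.
  - change (prodn (q :: S)) with (q * prodn S)%nat.
    apply (mod_trans _ (prodn S)); [apply Hp1; auto| apply prodn_pos; auto| |].
    apply IH; auto. intros r Hr; apply HS; simpl; auto. rewrite Nat.Div0.mod_mul; auto. Qed.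

Definition gE (e : list Z) (p : nat) : R := prod1 (length e) (fun i => powerRZ (1 - / (INR p ^ i)) (ecoef e i)).
Definition GE (e : list Z) (n : nat) : R := JordanQ e n * powerRZ (INR n) (- weight e).

Lemma weight_sum e : IZR (weight e) = sum1 (length e) (fun i => INR i * IZR (ecoef e i)).
Proof. unfold weight. generalize (length e) as r. intros r.
  assert (forall l z, fold_right Z.add z l = (z + fold_right Z.add 0 l)%Z) as Hf.
  { induction l; intros z; simpl; [lia| rewrite IHl; lia]. }
  induction r; [simpl; auto|].
  rewrite seq_S, map_app, fold_right_app. cbn [sum1]. rewrite <- IHr. cbn [map fold_right].
  rewrite Hf, plus_IZR, Z.add_0_r, mult_IZR, <- INR_IZR_INZ. replace (1 + r)%nat with (S r) by lia. ring. Qed.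

Lemma F_formula e n : (1 <= n)%nat ->
  GE e n = prod1 n (fun p => if primeb p && (n mod p =? 0)%nat then gE e p else 1).
Proof. intros Hn. assert (Hx : 0 < INR n) by (apply lt_0_INR; lia).
  unfold GE, JordanQ, Jordan.
  rewrite (prod1_ext _ _ (fun i => powerRZ (INR n ^ i) (ecoef e i) *
      prod1 n (fun p => powerRZ (if primeb p && (n mod p =? 0)%nat then 1 - / INR p ^ i else 1) (ecoef e i))))
    by (intros; rewrite powerRZ_mult, powerRZ_prod1; reflexivity).
  rewrite prod1_mult, prod1_swap.
  rewrite (prod1_ext (length e) _ (fun i => Rpower (INR n) (INR i * IZR (ecoef e i)))).
  2:{ intros i _. rewrite powerRZ_Rpower by (apply pow_lt; auto). rewrite <- Rpower_pow by auto. apply Rpower_mult. }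
  assert (Hs : forall r, prod1 r (fun i => Rpower (INR n) (INR i * IZR (ecoef e i))) = Rpower (INR n) (sum1 r (fun i => INR i * IZR (ecoef e i)))).
  { induction r; simpl. rewrite Rpower_O; auto. rewrite IHr, Rpower_plus; auto. }
  rewrite Hs, <- weight_sum.
  rewrite (prod1_ext n _ (fun p => if primeb p && (n mod p =? 0)%nat then gE e p else 1)).
  2:{ intros p _. destruct (primeb p && (n mod p =? 0)%nat); [reflexivity|].
      rewrite (prod1_ext _ _ (fun _ => 1)) by (intros; apply powerRZ_R1). apply prod1_one. }
  rewrite (powerRZ_Rpower _ (- weight e)) by auto. rewrite opp_IZR.
  replace (Rpower (INR n) (IZR (weight e)) * prod1 n (fun p => if primeb p && (n mod p =? 0)%nat then gE e p else 1) *
    Rpower (INR n) (- IZR (weight e))) with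
   ((Rpower (INR n) (IZR (weight e)) * Rpower (INR n) (- IZR (weight e))) * prod1 n (fun p => if primeb p && (n mod p =? 0)%nat then gE e p else 1)) by ring.
  rewrite <- Rpower_plus, Rplus_opp_r, Rpower_O by auto. ring. Qed.

Lemma prod1_extend n N f : (n <= N)%nat -> (forall k, (n < k <= N)%nat -> f k = 1) -> prod1 n f = prod1 N f.
Proof. intros H. induction H; intros Hf; auto. simpl. rewrite IHle by (intros; apply Hf; lia). rewrite Hf by lia. ring. Qed.

Lemma GE_prime e p : primeb p = true -> GE e p = gE e p.
Proof. intros Hp. pose proof (primeb_ge2 _ Hp). rewrite F_formula by lia.
  destruct p as [|p]; [lia|]. cbn [prod1]. rewrite Hp, Nat.Div0.mod_same. cbn [andb Nat.eqb].
  rewrite (prod1_ext _ _ (fun _ => 1)). rewrite prod1_one; ring.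
  intros q Hq. destruct (primeb q) eqn:Eq; simpl; auto.
  destruct (S p mod q =? 0)%nat eqn:E; auto. apply Nat.eqb_eq in E. apply prime_div_eq in E; auto. lia. Qed.

Lemma F_Qs e n N : (1 <= n <= N)%nat ->
  GE e n = prodL (Qs N) (fun p => if (n mod p =? 0)%nat then GE e p else 1).
Proof. intros Hn. rewrite F_formula by lia. rewrite <- prod1_filter.
  rewrite (prod1_extend n N) by (lia || (intros k Hk; destruct (primeb k); simpl; auto;
     rewrite Nat.mod_small by lia; destruct n; [lia|reflexivity])).
  apply prod1_ext. intros p Hp. destruct (primeb p) eqn:E; simpl; auto.
  destruct (n mod p =? 0)%nat; auto. symmetry; apply GE_prime; auto. Qed.

Lemma Qs_nodup N : NoDup (Qs N).
Proof. apply NoDup_filter, seq_NoDup. Qed.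
Lemma Qs_prime N : allprime (Qs N).
Proof. intros p Hp. unfold Qs in Hp. apply filter_In in Hp. tauto. Qed.
Lemma sub_Qs_prime N S : sub S (Qs N) -> allprime S.
Proof. intros H p Hp. apply (Qs_prime N). eapply sub_in; eauto. Qed.
Lemma sub_Qs_ge1 N S : sub S (Qs N) -> forall p, In p S -> (1 <= p)%nat.
Proof. intros H. apply allprime_ge1. eapply sub_Qs_prime; eauto. Qed.
Lemma sub_Qs_d N S : sub S (Qs N) -> (1 <= prodn S)%nat.
Proof. intros H. apply prodn_pos. eapply sub_Qs_ge1; eauto. Qed.
Lemma sub_Qs_dpos N S : sub S (Qs N) -> 0 < INR (prodn S).
Proof. intros H. apply lt_0_INR. pose proof (sub_Qs_d _ _ H). lia. Qed.

Lemma prodL_zero l f p : In p l -> f p = 0 -> prodL l f = 0.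
Proof. induction l; simpl; intros Hin Hf; [contradiction|]. destruct Hin as [->|Hin]. rewrite Hf; ring. rewrite IHl; auto; ring. Qed.
Lemma prodL_one l : prodL l (fun _ => 1) = 1.
Proof. induction l; simpl; auto. rewrite IHl; ring. Qed.

Definition ind (b : bool) : R := if b then 1 else 0.

Lemma prodL_ind S n : NoDup S -> allprime S ->
  prodL S (fun p => ind (n mod p =? 0)%nat) = ind (n mod prodn S =? 0)%nat.
Proof. intros Hnd Hpr. destruct (n mod prodn S =? 0)%nat eqn:E.
  - apply Nat.eqb_eq in E. simpl. rewrite (prodL_ext _ _ (fun _ => 1)). apply prodL_one.
    intros p Hp. pose proof (prodn_div S n p Hpr Hp E). unfold ind. rewrite (proj2 (Nat.eqb_eq _ _) H). auto.
  - simpl. destruct (classic (exists p, In p S /\ (n mod p <> 0)%nat)) as [[p [Hp Hd]]|Hno].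
    + apply (prodL_zero _ _ p Hp). unfold ind. apply Nat.eqb_neq in Hd. rewrite Hd. auto.
    + exfalso. apply Nat.eqb_neq in E. apply E. apply div_prodn; auto. intros p Hp.
      destruct (Nat.eq_dec (n mod p) 0); auto. exfalso; apply Hno; eauto. Qed.

Definition HS (e : list Z) (S : list nat) : R := prodL S (fun p => GE e p - 1).

Lemma GE_SS e n N : (1 <= n <= N)%nat ->
  GE e n = SS (Qs N) (fun S => ind (n mod prodn S =? 0)%nat * HS e S).
Proof. intros Hn. rewrite (F_Qs e n N Hn).
  rewrite (prodL_ext _ _ (fun p => 1 + ind (n mod p =? 0)%nat * (GE e p - 1))).
  2:{ intros p _. unfold ind. destruct (n mod p =? 0)%nat; ring. }
  rewrite <- SS_prod. apply SS_ext. intros S HSub. rewrite prodL_mult. f_equal.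
  apply prodL_ind. eapply sub_nodup; eauto. apply Qs_nodup. eapply sub_Qs_prime; eauto. Qed.

Lemma sum1_mult N d f : (1 <= d)%nat ->
  sum1 N (fun n => ind (n mod d =? 0)%nat * f n) = sum1 (N / d) (fun m => f (d * m)%nat).
Proof. intros Hd. induction N.
  - rewrite Nat.Div0.div_0_l. reflexivity.
  - pose proof (Nat.div_mod_eq N d) as Hdm. pose proof (Nat.mod_upper_bound N d ltac:(lia)) as Hb.
    set (q := (N / d)%nat) in *. set (r := (N mod d)%nat) in *.
    cbn [sum1]. rewrite IHN.
    destruct (Nat.eq_dec (S r) d) as [Heq|Hne].
    + assert (S N / d = S q)%nat as E1 by (symmetry; apply (Nat.div_unique _ _ _ 0); lia).
      assert (S N mod d = 0)%nat as E2 by (rewrite Nat.Div0.mod_eq; rewrite E1; nia).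
      rewrite E1, E2. cbn [sum1]. unfold ind. cbn [Nat.eqb]. rewrite Rmult_1_l. f_equal. f_equal. nia.
    + assert (S N / d = q)%nat as E1 by (symmetry; apply (Nat.div_unique _ _ _ (S r)); lia).
      assert (S N mod d = S r)%nat as E2 by (rewrite Nat.Div0.mod_eq; rewrite E1; nia).
      rewrite E1, E2. unfold ind; simpl. ring. Qed.

Lemma sum_expand e N0 N g : (N0 <= N)%nat -> (forall a b, (1 <= a)%nat -> (1 <= b)%nat -> g (a * b)%nat = g a * g b) ->
  sum1 N0 (fun n => GE e n * g n) =
  SS (Qs N) (fun S => HS e S * g (prodn S) * sum1 (N0 / prodn S) g).
Proof. intros HN Hg.
  rewrite (sum1_ext _ _ (fun n => SS (Qs N) (fun S => (ind (n mod prodn S =? 0)%nat * g n) * HS e S))).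
  2:{ intros n Hn. rewrite (GE_SS e n N) by lia. rewrite Rmult_comm, <- SS_scal. apply SS_ext; intros; ring. }
  rewrite <- SS_sum1. apply SS_ext. intros S HSub.
  rewrite (sum1_ext _ _ (fun n => HS e S * (ind (n mod prodn S =? 0)%nat * g n))) by (intros; ring).
  rewrite sum1_scal, sum1_mult by (eapply sub_Qs_d; eauto).
  rewrite Rmult_assoc. f_equal. rewrite <- sum1_scal. apply sum1_ext. intros m Hm. apply Hg; auto.
  eapply sub_Qs_d; eauto. lia. Qed.

Lemma SP_SS e N : SingPartial e N = SS (Qs N) (fun S => HS e S / INR (prodn S)).
Proof. unfold SingPartial. rewrite (prod1_ext N _ (fun p => if primeb p then 1 + (GE e p - 1) / INR p else 1)) by reflexivity. rewrite (prod1_filter N (fun p => 1 + (GE e p - 1) / INR p)).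
  rewrite <- SS_prod. apply SS_ext. intros S HSub. unfold Rdiv. rewrite prodL_mult. unfold HS. f_equal.
  rewrite INR_prodn. clear. induction S; simpl. lra. rewrite IHS, Rinv_mult. auto. Qed.

Lemma P_SS e N eps : prodL (Qs N) (fun p => 1 + Rabs (GE e p - 1) * Rpower (INR p) (- eps)) =
  SS (Qs N) (fun S => Rabs (HS e S) * Rpower (INR (prodn S)) (- eps)).
Proof. rewrite <- SS_prod. apply SS_ext. intros S HSub. rewrite prodL_mult. unfold HS. rewrite prodL_abs. f_equal.
  apply prodL_Rpower. eapply sub_Qs_ge1; eauto. Qed.

Lemma exp_le x y : x <= y -> exp x <= exp y.
Proof. intros H. destruct H as [H|H]; [apply Rlt_le, exp_increasing; auto| rewrite H; lra]. Qed.
Lemma ln_le x y : 0 < x -> x <= y -> ln x <= ln y.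
Proof. intros Hx H. destruct H as [H|H]; [apply Rlt_le, ln_increasing; auto| rewrite H; lra]. Qed.
Lemma ln_nonneg x : 1 <= x -> 0 <= ln x.
Proof. intros H. rewrite <- ln_1. apply ln_le; lra. Qed.
Lemma ln_le_minus1 y : 0 < y -> ln y <= y - 1.
Proof. intros H. pose proof (exp_ineq1_le (ln y)). rewrite exp_ln in H0; auto. lra. Qed.
Lemma Rp_pos x a : 0 < Rpower x a.
Proof. apply exp_pos. Qed.
Lemma Rp_one a : Rpower 1 a = 1.
Proof. unfold Rpower. rewrite ln_1, Rmult_0_r, exp_0. auto. Qed.
Lemma Rp_mult x y a : 0 < x -> 0 < y -> Rpower (x * y) a = Rpower x a * Rpower y a.
Proof. intros; rewrite Rpower_mult_distr; auto. Qed.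
Lemma Rp_inv x a : 0 < x -> Rpower (/ x) a = / Rpower x a.
Proof. intros H. unfold Rpower. rewrite ln_Rinv by auto. rewrite <- exp_Ropp. f_equal; ring. Qed.
Lemma Rp_div x y a : 0 < x -> 0 < y -> Rpower (x / y) a = Rpower x a / Rpower y a.
Proof. intros. unfold Rdiv. rewrite Rp_mult, Rp_inv; auto. apply Rinv_0_lt_compat; auto. Qed.
Lemma Rp_opp x a : Rpower x (- a) = / Rpower x a.
Proof. apply Rpower_Ropp. Qed.
Lemma Rp_mono_exp x a b : 1 <= x -> a <= b -> Rpower x a <= Rpower x b.
Proof. intros. apply Rle_Rpower; auto. Qed.
Lemma Rp_anti_exp x a b : 0 < x <= 1 -> a <= b -> Rpower x b <= Rpower x a.
Proof. intros Hx Hab. unfold Rpower. apply exp_le. assert (ln x <= 0) by (rewrite <- ln_1; apply ln_le; lra). nra. Qed.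
Lemma Rp_mono_base x y a : 0 <= a -> 0 < x <= y -> Rpower x a <= Rpower y a.
Proof. intros. apply Rle_Rpower_l; auto. Qed.
Lemma Rp_anti_base x y a : a <= 0 -> 0 < x <= y -> Rpower y a <= Rpower x a.
Proof. intros Ha Hxy. unfold Rpower. apply exp_le. pose proof (ln_le x y ltac:(lra) ltac:(lra)). nra. Qed.
Lemma Rp_ge1 x a : 1 <= x -> 0 <= a -> 1 <= Rpower x a.
Proof. intros. rewrite <- (Rp_one a). apply Rp_mono_base; lra. Qed.
Lemma Rp_le1 x a : 1 <= x -> a <= 0 -> Rpower x a <= 1.
Proof. intros. rewrite <- (Rp_one a). apply Rp_anti_base; lra. Qed.
Lemma Rp_0 x : 0 < x -> Rpower x 0 = 1.
Proof. apply Rpower_O. Qed.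
Lemma Rp_1 x : 0 < x -> Rpower x 1 = x.
Proof. apply Rpower_1. Qed.
Lemma Rp_plus x a b : Rpower x (a + b) = Rpower x a * Rpower x b.
Proof. apply Rpower_plus. Qed.
Lemma Rp_ln x a : ln (Rpower x a) = a * ln x.
Proof. unfold Rpower. rewrite ln_exp; auto. Qed.
Lemma Rp_Rp x a b : Rpower (Rpower x a) b = Rpower x (a * b).
Proof. apply Rpower_mult. Qed.

Lemma ratio2 u v a : 0 < u <= v -> v <= 2 * u ->
  Rpower v a <= Rpower 2 (Rabs a) * Rpower u a /\ Rpower u a <= Rpower 2 (Rabs a) * Rpower v a.
Proof. intros Hu Hv. assert (Hv' : v = u * (v / u)) by (field; lra). assert (Hr : 1 <= v / u <= 2).
  { split; [apply Rmult_le_reg_r with u; [lra|]; unfold Rdiv; rewrite Rmult_assoc, Rinv_l; lra|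
            apply Rmult_le_reg_r with u; [lra|]; unfold Rdiv; rewrite Rmult_assoc, Rinv_l; lra]. }
  rewrite Hv'. rewrite Rp_mult by (lra || (apply Rlt_le_trans with 1; lra)).
  pose proof (Rp_pos u a). pose proof (Rp_pos (v/u) a).
  destruct (Rle_dec 0 a) as [Ha|Ha].
  - rewrite Rabs_right by lra. assert (Rpower (v/u) a <= Rpower 2 a) by (apply Rp_mono_base; lra).
    assert (1 <= Rpower (v/u) a) by (apply Rp_ge1; lra). split.
    + rewrite Rmult_comm. apply Rmult_le_compat_r; lra.
    + assert (Rpower u a * 1 <= Rpower u a * (Rpower 2 a * Rpower (v/u) a)) by (apply Rmult_le_compat_l; nra). nra.
  - rewrite Rabs_left by lra. assert (Rpower (v/u) a <= 1) by (apply Rp_le1; lra).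
    assert (Rpower 2 (-a) * Rpower (v/u) a >= 1).
    { rewrite <- (Rp_one a). rewrite Rp_opp. assert (Rpower 2 a <= Rpower (v/u) a) by (apply Rp_anti_base; lra).
      pose proof (Rp_pos 2 a). apply Rle_ge. apply Rmult_le_reg_l with (Rpower 2 a); auto.
      rewrite <- Rmult_assoc, Rinv_r, Rp_one by lra. lra. }
    assert (1 <= Rpower 2 (-a)) by (apply Rp_ge1; lra). split.
    + assert (Rpower u a * Rpower (v/u) a <= Rpower u a * 1) by (apply Rmult_le_compat_l; lra).
      assert (Rpower u a * 1 <= Rpower 2 (-a) * Rpower u a) by nra. lra.
    + assert (Rpower u a * 1 <= Rpower u a * (Rpower 2 (-a) * Rpower (v/u) a)) by (apply Rmult_le_compat_l; lra). nra. Qed.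

Lemma MVT_pow u v a : 0 < u < v -> exists xi, u < xi < v /\
  Rpower v a - Rpower u a = a * Rpower xi (a - 1) * (v - u).
Proof. intros Huv. destruct (MVT_cor2 (fun x => Rpower x a) (fun x => a * Rpower x (a - 1)) u v) as [c [Hc1 Hc2]].
  lra. intros c Hc. apply derivable_pt_lim_power. lra. exists c. split; auto. Qed.

Lemma MVT_ln u v : 0 < u < v -> exists xi, u < xi < v /\ ln v - ln u = / xi * (v - u).
Proof. intros Huv. destruct (MVT_cor2 ln (fun x => / x) u v) as [c [Hc1 Hc2]].
  lra. intros c Hc. apply derivable_pt_lim_ln. lra. exists c. split; auto. Qed.

Lemma ln_le_pow x d : 1 <= x -> 0 < d -> ln x <= Rpower x d / d.
Proof. intros Hx Hd. apply Rmult_le_reg_l with d; auto. unfold Rdiv.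
  rewrite (Rmult_comm (Rpower x d)), <- Rmult_assoc, Rinv_r, Rmult_1_l by lra.
  rewrite <- Rp_ln. pose proof (ln_le_minus1 (Rpower x d) (Rp_pos _ _)). lra. Qed.

Definition Ap (t X al c : R) := Rabs (X - 1 - al * t) <= c * t ^ 2.

Lemma Ap_mul t X Y al be c d : 0 <= t <= 1 -> 0 <= c -> 0 <= d -> Ap t X al c -> Ap t Y be d ->
  Ap t (X * Y) (al + be) (Rabs al * Rabs be + c * (1 + Rabs be + d) + d * (1 + Rabs al)).
Proof. unfold Ap. intros Ht Hc Hd HX HY.
  set (r := X - 1 - al * t) in *. set (s := Y - 1 - be * t) in *.
  replace (X * Y - 1 - (al + be) * t) with (al * be * t ^ 2 + r * Y + s * (1 + al * t)) by (unfold r, s; ring).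
  assert (HYb : Rabs Y <= 1 + Rabs be + d).
  { replace Y with (1 + be * t + s) by (unfold s; ring).
    eapply Rle_trans. apply Rabs_triang. eapply Rle_trans. apply Rplus_le_compat_r. apply Rabs_triang.
    rewrite Rabs_R1, Rabs_mult, (Rabs_right t) by lra.
    pose proof (Rabs_pos be). assert (Rabs be * t <= Rabs be * 1) by (apply Rmult_le_compat_l; lra).
    assert (t ^ 2 <= 1) by (simpl; nra).
    assert (d * t ^ 2 <= d * 1) by (apply Rmult_le_compat_l; lra). lra. }
  assert (H1 : Rabs (1 + al * t) <= 1 + Rabs al).
  { eapply Rle_trans. apply Rabs_triang. rewrite Rabs_R1, Rabs_mult, (Rabs_right t) by lra.
    pose proof (Rabs_pos al). assert (Rabs al * t <= Rabs al * 1) by (apply Rmult_le_compat_l; lra). lra. }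
  eapply Rle_trans. apply Rabs_triang. eapply Rle_trans. apply Rplus_le_compat_r. apply Rabs_triang.
  rewrite !Rabs_mult. rewrite (Rabs_right (t ^ 2)) by (apply Rle_ge, pow2_ge_0).
  pose proof (Rabs_pos r). pose proof (Rabs_pos s). pose proof (Rabs_pos Y). pose proof (Rabs_pos (1 + al * t)).
  pose proof (pow2_ge_0 t).
  assert (Rabs r * Rabs Y <= c * t ^ 2 * (1 + Rabs be + d)) by (apply Rmult_le_compat; auto).
  assert (Rabs s * Rabs (1 + al * t) <= d * t ^ 2 * (1 + Rabs al)) by (apply Rmult_le_compat; auto).
  lra. Qed.

Lemma Ap_one t : Ap t 1 0 0.
Proof. unfold Ap. replace (1 - 1 - 0 * t) with 0 by ring. rewrite Rabs_R0. lra. Qed.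

Definition UAp (F : R -> R) (al c : R) := forall t, 0 <= t <= 1/2 -> Ap t (F t) al c.

Lemma UAp_mul F G al be c d : 0 <= c -> 0 <= d -> UAp F al c -> UAp G be d ->
  exists c', 0 <= c' /\ UAp (fun t => F t * G t) (al + be) c'.
Proof. intros Hc Hd HF HG. exists (Rabs al * Rabs be + c * (1 + Rabs be + d) + d * (1 + Rabs al)).
  split. pose proof (Rabs_pos al); pose proof (Rabs_pos be). nra.
  intros t Ht. apply Ap_mul; auto; lra. Qed.

Lemma UAp_pow F al c : 0 <= c -> UAp F al c -> forall k, exists c', 0 <= c' /\ UAp (fun t => F t ^ k) (INR k * al) c'.
Proof. intros Hc HF k. induction k as [|k [c' [Hc' IH]]].
  - exists 0. split; [lra|]. intros t Ht. simpl. replace (0 * al) with 0 by ring. apply Ap_one.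
  - destruct (UAp_mul _ _ _ _ _ _ Hc' Hc IH HF) as [c'' [H1 H2]]. exists c''. split; auto.
    intros t Ht. rewrite S_INR. replace ((INR k + 1) * al) with (INR k * al + al) by ring. change (F t ^ S k) with (F t * F t ^ k). rewrite Rmult_comm. apply (H2 t Ht). Qed.

Lemma UAp_1mu : UAp (fun u => 1 - u) (-1) 0.
Proof. intros t Ht. unfold Ap. replace (1 - t - 1 - -1 * t) with 0 by ring. rewrite Rabs_R0. simpl; nra. Qed.
Lemma UAp_inv1mu : UAp (fun u => / (1 - u)) 1 2.
Proof. intros t Ht. unfold Ap. replace (/ (1 - t) - 1 - 1 * t) with (t ^ 2 / (1 - t)) by (field; lra).
  rewrite Rabs_right. apply Rmult_le_reg_r with (1 - t); [lra|]. unfold Rdiv. rewrite Rmult_assoc, Rinv_l by lra.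
  simpl; nra. apply Rle_ge. apply Rmult_le_pos. apply pow2_ge_0. apply Rlt_le, Rinv_0_lt_compat; lra. Qed.

Lemma UAp_powerRZ z : exists c, 0 <= c /\ UAp (fun u => powerRZ (1 - u) z) (- IZR z) c.
Proof. destruct (Z_le_gt_dec 0 z) as [Hz|Hz].
  - destruct (UAp_pow _ _ _ (Rle_refl 0) UAp_1mu (Z.to_nat z)) as [c [Hc H]]. exists c. split; auto.
    intros t Ht. specialize (H t Ht). rewrite <- (Z2Nat.id z) at 1 by lia. rewrite <- pow_powerRZ.
    rewrite INR_IZR_INZ, Z2Nat.id in H by lia. replace (- IZR z) with (IZR z * -1) by ring. auto.
  - destruct (UAp_pow _ 1 2 ltac:(lra) UAp_inv1mu (Z.to_nat (- z))) as [c [Hc H]]. exists c. split; auto.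
    intros t Ht. specialize (H t Ht). replace z with (- Z.of_nat (Z.to_nat (- z)))%Z at 1 by lia.
    rewrite INR_IZR_INZ, Z2Nat.id in H by lia.
    rewrite powerRZ_neg', <- pow_powerRZ, <- pow_inv.
    replace (- IZR z) with (IZR (- z) * 1) by (rewrite opp_IZR; ring). auto. Qed.

Lemma UAp_factor z i : (1 <= i)%nat -> exists c, 0 <= c /\ UAp (fun t => powerRZ (1 - t ^ i) z) (if (i =? 1)%nat then - IZR z else 0) c.
Proof. intros Hi. destruct (UAp_powerRZ z) as [c [Hc H]].
  destruct (Nat.eqb_spec i 1) as [->|Hne].
  - exists c; split; auto. intros t Ht. rewrite pow_1. apply H; auto.
  - exists (Rabs (IZR z) + c). split. pose proof (Rabs_pos (IZR z)); lra.
    intros t Ht. assert (Hu : 0 <= t ^ i <= t ^ 2).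
    { split. apply pow_le; lra. replace i with (2 + (i - 2))%nat by lia. rewrite pow_add.
      assert (0 <= t ^ (i - 2) <= 1) by (split; [apply pow_le; lra| rewrite <- (pow1 (i - 2)); apply pow_incr; lra]).
      pose proof (pow2_ge_0 t). nra. }
    assert (Hu2 : t ^ i <= 1/2) by (simpl in Hu; nra).
    specialize (H (t ^ i) ltac:(lra)). unfold Ap in *.
    replace (powerRZ (1 - t ^ i) z - 1 - 0 * t) with ((powerRZ (1 - t ^ i) z - 1 - - IZR z * t ^ i) - IZR z * t ^ i) by ring.
    eapply Rle_trans. apply Rabs_triang. rewrite Rabs_Ropp, Rabs_mult, (Rabs_right (t ^ i)) by lra.
    assert ((t ^ i) ^ 2 <= t ^ 2) by (simpl; simpl in Hu; nra).
    pose proof (Rabs_pos (IZR z)). nra. Qed.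

Lemma UAp_gE e : exists c, 0 <= c /\ UAp (fun t => prod1 (length e) (fun i => powerRZ (1 - t ^ i) (ecoef e i))) (- IZR (ecoef e 1)) c.
Proof.
  assert (forall r, exists c, 0 <= c /\ UAp (fun t => prod1 r (fun i => powerRZ (1 - t ^ i) (ecoef e i)))
      (if (r =? 0)%nat then 0 else - IZR (ecoef e 1)) c) as Hr.
  { induction r as [|r [c [Hc IH]]].
    - exists 0. split; [lra|]. intros t Ht. simpl. apply Ap_one.
    - destruct (UAp_factor (ecoef e (S r)) (S r) ltac:(lia)) as [d [Hd HF]].
      destruct (UAp_mul _ _ _ _ _ _ Hc Hd IH HF) as [c' [Hc' H']]. exists c'. split; auto.
      intros t Ht. specialize (H' t Ht). simpl prod1. destruct r; simpl in *.
      + replace (- IZR (ecoef e 1)) with (0 + - IZR (ecoef e 1)) by ring. auto.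
      + replace (- IZR (ecoef e 1)) with (- IZR (ecoef e 1) + 0) by ring. auto. }
  destruct (Hr (length e)) as [c [Hc H]]. exists c. split; auto.
  destruct (length e) eqn:E; auto. destruct e; [|discriminate]. unfold ecoef; simpl.
  replace (- 0) with 0 by ring. auto. Qed.

Lemma GE_bound e : exists B, 0 <= B /\ forall p, primeb p = true ->
  Rabs (GE e p - 1) <= INR (Z.abs_nat (ecoef e 1)) / INR p + B / INR p ^ 2.
Proof. destruct (UAp_gE e) as [c [Hc H]]. exists c. split; auto. intros p Hp.
  rewrite GE_prime by auto. pose proof (primeb_ge2 _ Hp) as Hp2. apply le_INR in Hp2.
  assert (Hpos : 0 < INR p) by (simpl in Hp2; lra).
  set (t := / INR p). assert (Ht : 0 <= t <= 1/2).
  { unfold t. split. apply Rlt_le, Rinv_0_lt_compat; auto. apply Rmult_le_reg_r with (INR p); auto.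
    rewrite Rinv_l by lra. simpl in Hp2; lra. }
  specialize (H t Ht). unfold Ap in H. unfold gE.
  rewrite (prod1_ext _ _ (fun i => powerRZ (1 - t ^ i) (ecoef e i))) by (intros; unfold t; rewrite pow_inv; auto).
  set (X := prod1 (length e) (fun i => powerRZ (1 - t ^ i) (ecoef e i))) in *.
  replace (X - 1) with ((X - 1 - - IZR (ecoef e 1) * t) - IZR (ecoef e 1) * t) by ring.
  eapply Rle_trans. apply Rabs_triang. rewrite Rabs_Ropp, Rabs_mult, (Rabs_right t) by lra.
  rewrite INR_IZR_INZ, Zabs2Nat.id_abs, abs_IZR.
  replace (Rabs (IZR (ecoef e 1)) / INR p) with (Rabs (IZR (ecoef e 1)) * t) by (unfold t, Rdiv; ring).
  replace (c / INR p ^ 2) with (c * t ^ 2) by (unfold t, Rdiv; rewrite pow_inv; ring). lra. Qed.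

Definition cop (Q : list nat) (n : nat) : bool := forallb (fun p => negb (n mod p =? 0)%nat) Q.
Definition T (s : R) (Q : list nat) (L : nat) : R := sum1 L (fun n => ind (cop Q n) * Rpower (INR n) (- s)).

Lemma ind_nonneg b : 0 <= ind b.
Proof. destruct b; simpl; lra. Qed.
Lemma T_mono s Q L L' : (L <= L')%nat -> T s Q L <= T s Q L'.
Proof. intros H. apply sum1_mono_N; auto. intros n. apply Rmult_le_pos. apply ind_nonneg. apply Rlt_le, Rp_pos. Qed.
Lemma T_cons_le s q Q L : T s (q :: Q) L <= T s Q L.
Proof. apply sum1_le. intros n _. apply Rmult_le_compat_r. apply Rlt_le, Rp_pos.
  unfold cop; simpl. destruct (negb _); simpl; destruct (forallb _ _); simpl; lra. Qed.

Lemma mod_mul_prime p q m : primeb p = true -> primeb q = true -> p <> q ->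
  (((q * m) mod p =? 0)%nat = (m mod p =? 0)%nat).
Proof. intros Hp Hq Hne. pose proof (primeb_ge2 _ Hp).
  destruct (Nat.eqb_spec ((q * m) mod p) 0) as [H1|H1]; destruct (Nat.eqb_spec (m mod p) 0) as [H2|H2]; auto.
  - apply prime_euclid in H1; auto. destruct H1 as [H1|H1]; [|contradiction]. apply prime_div_eq in H1; auto. contradiction.
  - exfalso. apply H1. apply modZ in H2; [|lia]. apply modZ; [lia|]. rewrite Nat2Z.inj_mul. apply Z.divide_mul_r; auto. Qed.

Lemma cop_mul q Q m : primeb q = true -> allprime Q -> ~ In q Q -> cop Q (q * m) = cop Q m.
Proof. intros Hq. induction Q as [|p Q IH]; intros HQ Hin; simpl; auto.
  rewrite mod_mul_prime; auto. rewrite IH; auto. intros r Hr; apply HQ; simpl; auto.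
  intro; apply Hin; simpl; auto. apply HQ; simpl; auto. intro; apply Hin; simpl; auto. Qed.

Lemma sieve_id s q Q M : primeb q = true -> allprime Q -> ~ In q Q ->
  T s Q (q * M) = T s (q :: Q) (q * M) + Rpower (INR q) (- s) * T s Q M.
Proof. intros Hq HQ Hin. pose proof (primeb_ge2 _ Hq). unfold T.
  rewrite (sum1_ext (q * M) (fun n => ind (cop Q n) * Rpower (INR n) (- s))
     (fun n => ind (cop (q :: Q) n) * Rpower (INR n) (- s) + ind (n mod q =? 0)%nat * (ind (cop Q n) * Rpower (INR n) (- s)))).
  2:{ intros n _. unfold cop at 2; simpl. fold (cop Q n). destruct (n mod q =? 0)%nat, (cop Q n); simpl; ring. }
  rewrite sum1_plus. f_equal. rewrite sum1_mult by lia. replace (q * M / q)%nat with M by (rewrite Nat.mul_comm, Nat.div_mul; lia).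
  rewrite <- sum1_scal. apply sum1_ext. intros m Hm. rewrite cop_mul; auto.
  rewrite mult_INR, Rp_mult. ring. apply lt_0_INR; lia. apply lt_0_INR; lia. Qed.

Lemma sieve_step s q Q M : 0 < s -> primeb q = true -> allprime Q -> ~ In q Q ->
  (1 + Rpower (INR q) (- s)) * T s (q :: Q) M <= T s Q (q * M).
Proof. intros Hs Hq HQ Hin. pose proof (primeb_ge2 _ Hq). rewrite sieve_id by auto.
  assert (T s (q :: Q) M <= T s (q :: Q) (q * M)) by (apply T_mono; nia).
  assert (T s (q :: Q) M <= T s Q M) by apply T_cons_le.
  pose proof (Rp_pos (INR q) (- s)). nra. Qed.

Lemma T_one s Q : allprime Q -> T s Q 1 = 1.
Proof. intros HQ. unfold T. simpl. replace (cop Q 1) with true.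
  simpl. rewrite Rp_one. ring. symmetry. unfold cop. apply forallb_forall. intros p Hp.
  pose proof (primeb_ge2 _ (HQ p Hp)). rewrite Nat.mod_small by lia. reflexivity. Qed.

Lemma sieve_list s Q : 0 < s -> NoDup Q -> allprime Q -> forall M,
  prodL Q (fun p => 1 + Rpower (INR p) (- s)) * T s Q M <= T s nil (M * prodn Q).
Proof. intros Hs. induction Q as [|q Q IH]; intros Hnd HQ M.
  - simpl. rewrite Nat.mul_1_r. lra.
  - inversion Hnd; subst. assert (HQ' : allprime Q) by (intros r Hr; apply HQ; simpl; auto).
    simpl prodL. pose proof (sieve_step s q Q M Hs (HQ q (or_introl eq_refl)) HQ' H1).
    assert (0 <= prodL Q (fun p => 1 + Rpower (INR p) (- s))) by
      (apply prodL_nonneg; intros; pose proof (Rp_pos (INR p) (-s)); lra).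
    specialize (IH H2 HQ' (q * M)%nat). change (prodn (q :: Q)) with (q * prodn Q)%nat.
    replace (M * (q * prodn Q))%nat with (q * M * prodn Q)%nat by ring.
    eapply Rle_trans; [|apply IH].
    replace ((1 + Rpower (INR q) (- s)) * prodL Q (fun p => 1 + Rpower (INR p) (- s)) * T s (q :: Q) M) with
      (prodL Q (fun p => 1 + Rpower (INR p) (- s)) * ((1 + Rpower (INR q) (- s)) * T s (q :: Q) M)) by ring.
    apply Rmult_le_compat_l; auto. Qed.

Lemma zeta_bound s L : 1 < s -> T s nil L <= s / (s - 1).
Proof. intros Hs. unfold T. simpl.
  assert (forall L, (1 <= L)%nat -> sum1 L (fun n => 1 * Rpower (INR n) (- s)) <= 1 + (1 - Rpower (INR L) (1 - s)) / (s - 1)).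
  { intros L0 HL. induction HL.
    - simpl. rewrite Rp_one. unfold Rdiv. rewrite Rp_one. lra.
    - cbn [sum1]. rename m into L1.
      assert (HL1 : 1 <= INR L1) by (apply (le_INR 1); auto).
      rewrite S_INR. destruct (MVT_pow (INR L1) (INR L1 + 1) (1 - s) ltac:(lra)) as [xi [Hxi Heq]].
      assert (Ha : Rpower (INR L1 + 1) (- s) <= Rpower xi (1 - s - 1)).
      { replace (1 - s - 1) with (- s) by ring. apply Rp_anti_base; lra. }
      assert (H1 : Rpower (INR L1) (1 - s) - Rpower (INR L1 + 1) (1 - s) = (s - 1) * Rpower xi (1 - s - 1)) by
        (replace (INR L1 + 1 - INR L1) with 1 in Heq by ring; lra).
      assert (Rpower (INR L1 + 1) (- s) <= (Rpower (INR L1) (1 - s) - Rpower (INR L1 + 1) (1 - s)) / (s - 1)).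
      { rewrite H1. unfold Rdiv. rewrite (Rmult_comm (s - 1)), Rmult_assoc, Rinv_r by lra. lra. }
      assert (forall a b, a / (s - 1) + b / (s - 1) = (a + b) / (s - 1)) as Hd by (intros; field; lra).
      rewrite Rmult_1_l. apply Rle_trans with (1 + (1 - Rpower (INR L1) (1 - s)) / (s - 1) + (Rpower (INR L1) (1 - s) - Rpower (INR L1 + 1) (1 - s)) / (s - 1)).
      lra. rewrite Rplus_assoc, Hd. right. f_equal. f_equal. ring. }
  destruct L. simpl. apply Rlt_le, Rdiv_lt_0_compat; lra.
  eapply Rle_trans. apply H. lia. pose proof (Rp_pos (INR (S L)) (1 - s)).
  assert ((1 - Rpower (INR (S L)) (1 - s)) / (s - 1) <= 1 / (s - 1)).
  { unfold Rdiv. apply Rmult_le_compat_r. apply Rlt_le, Rinv_0_lt_compat; lra. lra. }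
  replace (s / (s - 1)) with (1 + 1 / (s - 1)) by (field; lra). lra. Qed.

Lemma euler_bound s N : 1 < s -> prodL (Qs N) (fun p => 1 + Rpower (INR p) (- s)) <= s / (s - 1).
Proof. intros Hs. pose proof (sieve_list s (Qs N) ltac:(lra) (Qs_nodup N) (Qs_prime N) 1).
  rewrite T_one in H by apply Qs_prime. rewrite Rmult_1_r in H. eapply Rle_trans; [apply H|]. apply zeta_bound; auto. Qed.

Lemma bernoulli u k : 0 <= u -> 1 + INR k * u <= (1 + u) ^ k.
Proof. intros Hu. induction k. simpl; lra. rewrite S_INR. simpl.
  assert (0 <= INR k * u) by (apply Rmult_le_pos; auto; apply pos_INR). nra. Qed.

Lemma prod1_exp N v : (forall n, 0 <= v n) -> prod1 N (fun n => 1 + v n) <= exp (sum1 N v).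
Proof. intros Hv. induction N; simpl. rewrite exp_0; lra. rewrite exp_plus.
  apply Rmult_le_compat; auto. apply prod1_nonneg. intros; specialize (Hv n); lra. specialize (Hv (S N)); lra.
  apply exp_ineq1_le. Qed.

Lemma sum_inv_sq' N : sum1 (S N) (fun n => / INR n ^ 2) <= 2 - / INR (S N).
Proof. induction N. simpl. lra. cbn [sum1]. cbn [sum1] in IHN. eapply Rle_trans. apply Rplus_le_compat_r. apply IHN.
  rewrite !S_INR. assert (0 <= INR N) by apply pos_INR.
  assert (/ (INR N + 1 + 1) ^ 2 <= / (INR N + 1) - / (INR N + 1 + 1)).
  { replace (/ (INR N + 1) - / (INR N + 1 + 1)) with (/ ((INR N + 1) * (INR N + 2))) by (field; lra).
    apply Rinv_le_contravar. nra. simpl; nra. }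
  lra. Qed.
Lemma sum_inv_sq N : sum1 N (fun n => / INR n ^ 2) <= 2.
Proof. destruct N. simpl; lra. pose proof (sum_inv_sq' N). assert (0 < / INR (S N)) by (apply Rinv_0_lt_compat, lt_0_INR; lia). lra. Qed.

Lemma KEY e : exists K, 0 < K /\ forall eps N, 0 < eps <= 1 ->
  prodL (Qs N) (fun p => 1 + Rabs (GE e p - 1) * Rpower (INR p) (- eps)) <= K / eps ^ (Z.abs_nat (ecoef e 1)).
Proof. destruct (GE_bound e) as [B [HB Hb]]. set (a := Z.abs_nat (ecoef e 1)) in *.
  exists (2 ^ a * exp (2 * B)). split. apply Rmult_lt_0_compat. apply pow_lt; lra. apply exp_pos.
  intros eps N Heps.
  set (u := fun p : nat => Rpower (INR p) (- (1 + eps))).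
  apply Rle_trans with (prodL (Qs N) (fun p => (1 + u p) ^ a * (1 + B / INR p ^ 2))).
  { apply prodL_le. intros p Hp. assert (Hpr := Qs_prime N p Hp). pose proof (primeb_ge2 _ Hpr) as Hp2.
    apply le_INR in Hp2. simpl in Hp2. assert (Hpp : 0 < INR p) by lra.
    pose proof (Rp_pos (INR p) (- eps)) as Hpe. pose proof (Rabs_pos (GE e p - 1)).
    split. nra.
    assert (Hpe1 : Rpower (INR p) (- eps) <= 1) by (apply Rp_le1; lra).
    assert (Hu : u p = / INR p * Rpower (INR p) (- eps)).
    { unfold u. rewrite Ropp_plus_distr, Rp_plus, Rp_opp, Rp_1; auto. }
    pose proof (Hb p Hpr) as Hbp.
    assert (Hup : 0 <= u p) by (apply Rlt_le, Rp_pos).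
    assert (HBp : 0 <= B / INR p ^ 2) by (apply Rmult_le_pos; auto; apply Rlt_le, Rinv_0_lt_compat, pow_lt; auto).
    apply Rle_trans with (1 + INR a * u p + B / INR p ^ 2).
    { apply Rle_trans with (1 + (INR a / INR p + B / INR p ^ 2) * Rpower (INR p) (- eps)).
      apply Rplus_le_compat_l. apply Rmult_le_compat_r; lra.
      rewrite Hu. unfold Rdiv. assert (B * / INR p ^ 2 * Rpower (INR p) (- eps) <= B * / INR p ^ 2 * 1).
      apply Rmult_le_compat_l; auto. lra. }
    pose proof (bernoulli (u p) a Hup). assert (0 <= INR a * u p) by (apply Rmult_le_pos; auto; apply pos_INR).
    assert (1 <= (1 + u p) ^ a) by nra. nra. }
  rewrite prodL_mult, prodL_pow.
  assert (H1 : 0 <= prodL (Qs N) (fun p => 1 + u p)) by (apply prodL_nonneg; intros; pose proof (Rp_pos (INR p) (-(1+eps))); unfold u; lra).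
  assert (H2 : prodL (Qs N) (fun p => 1 + u p) <= 2 / eps).
  { unfold u. eapply Rle_trans. apply euler_bound. lra. replace (1 + eps - 1) with eps by ring.
    unfold Rdiv. apply Rmult_le_compat_r. apply Rlt_le, Rinv_0_lt_compat; lra. lra. }
  assert (H3 : prodL (Qs N) (fun p => 1 + B / INR p ^ 2) <= exp (2 * B)).
  { rewrite <- prod1_filter. eapply Rle_trans.
    apply (prod1_le _ _ (fun n => 1 + B * / INR n ^ 2)).
    { intros n Hn. assert (0 <= B * / INR n ^ 2) by (apply Rmult_le_pos; auto; apply Rlt_le, Rinv_0_lt_compat, pow_lt, lt_0_INR; lia).
      destruct (primeb n); unfold Rdiv; lra. }
    eapply Rle_trans. apply prod1_exp. intros n. destruct n. simpl. rewrite Rmult_0_l, Rinv_0, Rmult_0_r; lra.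
    apply Rmult_le_pos; auto; apply Rlt_le, Rinv_0_lt_compat, pow_lt, lt_0_INR; lia.
    apply exp_le. rewrite sum1_scal. pose proof (sum_inv_sq N). nra. }
  assert (H4 : prodL (Qs N) (fun p => 1 + u p) ^ a <= (2 / eps) ^ a) by (apply pow_incr; lra).
  assert (H5 : 0 <= prodL (Qs N) (fun p => 1 + B / INR p ^ 2)).
  { apply prodL_nonneg. intros p Hp. pose proof (primeb_ge2 _ (Qs_prime N p Hp)).
    assert (0 <= B / INR p ^ 2) by (apply Rmult_le_pos; auto; apply Rlt_le, Rinv_0_lt_compat, pow_lt, lt_0_INR; lia). lra. }
  unfold Rdiv in *. rewrite Rpow_mult_distr, pow_inv in H4.
  assert (0 <= (2 / eps) ^ a) by (apply pow_le; unfold Rdiv; apply Rmult_le_pos; [lra| apply Rlt_le, Rinv_0_lt_compat; lra]).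
  apply Rle_trans with (2 ^ a * / eps ^ a * exp (2 * B)).
  apply Rmult_le_compat; auto. apply pow_le; auto. right; ring. Qed.

Definition floorN (x : R) : nat := Z.to_nat (Int_part x).

Lemma floorN_spec x : 0 <= x -> INR (floorN x) <= x < INR (floorN x) + 1.
Proof. intros Hx. pose proof (base_Int_part x) as [H1 H2]. unfold floorN.
  assert (0 <= Int_part x)%Z.
  { destruct (Z_le_gt_dec 0 (Int_part x)); auto. assert (Int_part x <= -1)%Z by lia. apply IZR_le in H. lra. }
  rewrite INR_IZR_INZ, Z2Nat.id by auto. lra. Qed.
Lemma floorN_unique x k : INR k <= x < INR k + 1 -> floorN x = k.
Proof. intros [H1 H2]. unfold floorN, Int_part.
  assert (Z.of_nat k + 1 = up x)%Z. { apply tech_up; rewrite plus_IZR, <- INR_IZR_INZ; simpl; lra. }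
  rewrite <- H. lia. Qed.
Lemma floorN_INR n : floorN (INR n) = n.
Proof. apply floorN_unique. lra. Qed.
Lemma floorN_div x d : 0 <= x -> (1 <= d)%nat -> floorN (x / INR d) = (floorN x / d)%nat.
Proof. intros Hx Hd. pose proof (floorN_spec x Hx) as [H1 H2]. set (n := floorN x) in *.
  assert (Hdp : 0 < INR d) by (apply lt_0_INR; lia).
  pose proof (Nat.div_mod_eq n d) as Hdm. pose proof (Nat.mod_upper_bound n d ltac:(lia)) as Hb.
  apply floorN_unique. set (q := (n / d)%nat) in *. set (r := (n mod d)%nat) in *.
  assert (HnR : INR n = INR d * INR q + INR r) by (rewrite Hdm at 1; rewrite plus_INR, mult_INR; auto).
  assert (HrR : INR r + 1 <= INR d) by (rewrite <- S_INR; apply le_INR; lia).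
  pose proof (pos_INR r). split.
  - apply Rmult_le_reg_l with (INR d); auto. unfold Rdiv. rewrite <- Rmult_assoc, (Rmult_comm (INR d) x), Rmult_assoc, Rinv_r by lra. nra.
  - apply Rmult_lt_reg_l with (INR d); auto. unfold Rdiv. rewrite <- Rmult_assoc, (Rmult_comm (INR d) x), Rmult_assoc, Rinv_r by lra. nra. Qed.
Lemma floorN_small x : 0 <= x < 1 -> floorN x = 0%nat.
Proof. intros H. apply floorN_unique. simpl; lra. Qed.
Lemma floorN_ge1 x : 1 <= x -> (1 <= floorN x)%nat.
Proof. intros H. pose proof (floorN_spec x ltac:(lra)) as [H1 H2]. destruct (floorN x); [simpl in *; lra| lia]. Qed.

Lemma MVT_M g u v : 0 < u < v -> exists xi, u < xi < v /\ Mfun g v - Mfun g u = Rpower xi g * (v - u).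
Proof. intros Huv. unfold Mfun. destruct (Req_EM_T g (-1)) as [->|Hg].
  - destruct (MVT_ln u v Huv) as [xi [Hxi Heq]]. exists xi. split; auto. rewrite Heq.
    assert (Rpower xi (-1) = / xi) as E by (replace (-1) with (Ropp 1) by ring; rewrite Rp_opp, Rp_1; lra).
    rewrite E. auto.
  - destruct (MVT_pow u v (g + 1) Huv) as [xi [Hxi Heq]]. exists xi. split; auto.
    assert (g + 1 <> 0) by (intro; apply Hg; lra).
    replace (g + 1 - 1) with g in Heq by ring.
    unfold Rdiv. rewrite <- Rmult_minus_distr_r, Heq. field; auto. Qed.

Lemma M_diff_bound g u v : 1 <= u <= v -> v <= 2 * u ->
  Rabs (Mfun g v - Mfun g u) <= Rpower 2 (Rabs g) * Rpower u g * (v - u).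
Proof. intros Hu Hv. destruct (Req_dec u v) as [<-|Hne].
  - rewrite Rminus_diag, Rabs_R0. rewrite Rminus_diag, Rmult_0_r. lra.
  - destruct (MVT_M g u v ltac:(lra)) as [xi [Hxi Heq]]. rewrite Heq, Rabs_mult.
    rewrite (Rabs_right (Rpower xi g)) by (apply Rle_ge, Rlt_le, Rp_pos).
    rewrite (Rabs_right (v - u)) by lra.
    destruct (ratio2 u xi g ltac:(lra) ltac:(lra)) as [H1 H2].
    apply Rmult_le_compat_r; lra. Qed.

Definition Dfun (g t : R) : R := sum_le t (fun m => Rpower (INR m) g) - Mfun g t.

Lemma sum_le_INR n f : sum_le (INR n) f = sum1 n f.
Proof. unfold sum_le. rewrite Int_part_INR, Nat2Z.id. auto. Qed.
Lemma sum_le_floor t f : sum_le t f = sum1 (floorN t) f.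
Proof. reflexivity. Qed.

Lemma D_step g n : (1 <= n)%nat ->
  Rabs (Dfun g (INR (S n)) - Dfun g (INR n)) <= Rabs g * Rpower 2 (Rabs (g - 1)) * Rpower (INR (S n)) (g - 1).
Proof. intros Hn. unfold Dfun. rewrite !sum_le_INR. cbn [sum1]. rewrite S_INR.
  assert (HnR : 1 <= INR n) by (apply (le_INR 1); auto).
  destruct (MVT_M g (INR n) (INR n + 1) ltac:(lra)) as [xi [Hxi Heq]].
  replace (sum1 n (fun m => Rpower (INR m) g) + Rpower (INR n + 1) g - Mfun g (INR n + 1) - (sum1 n (fun m => Rpower (INR m) g) - Mfun g (INR n)))
    with (Rpower (INR n + 1) g - (Mfun g (INR n + 1) - Mfun g (INR n))) by ring.
  rewrite Heq. replace (INR n + 1 - INR n) with 1 by ring. rewrite Rmult_1_r.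
  destruct (MVT_pow xi (INR n + 1) g ltac:(lra)) as [eta [Heta Heq2]]. rewrite Heq2.
  rewrite !Rabs_mult. rewrite (Rabs_right (Rpower eta (g - 1))) by (apply Rle_ge, Rlt_le, Rp_pos).
  rewrite (Rabs_right (INR n + 1 - xi)) by lra.
  destruct (ratio2 eta (INR n + 1) (g - 1) ltac:(lra) ltac:(lra)) as [_ H2].
  pose proof (Rabs_pos g). pose proof (Rp_pos eta (g - 1)).
  assert (Rabs g * Rpower eta (g - 1) * (INR n + 1 - xi) <= Rabs g * Rpower eta (g - 1) * 1).
  { apply Rmult_le_compat_l. nra. lra. }
  assert (Rabs g * Rpower eta (g - 1) <= Rabs g * (Rpower 2 (Rabs (g - 1)) * Rpower (INR n + 1) (g - 1))).
  { apply Rmult_le_compat_l; lra. }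
  nra. Qed.

Lemma pow_tele g m : g <> 0 -> (2 <= m)%nat ->
  Rpower (INR m) (g - 1) <= Rpower 2 (Rabs (g - 1)) * ((Rpower (INR m) g - Rpower (INR (m - 1)) g) / g).
Proof. intros Hg Hm. assert (Hm1 : INR (m - 1) = INR m - 1) by (rewrite minus_INR by lia; simpl; ring).
  assert (HmR : 2 <= INR m) by (apply (le_INR 2); auto).
  destruct (MVT_pow (INR (m - 1)) (INR m) g ltac:(rewrite Hm1; lra)) as [xi [Hxi Heq]].
  rewrite Heq. rewrite Hm1 in *. replace (INR m - (INR m - 1)) with 1 by ring.
  replace (g * Rpower xi (g - 1) * 1 / g) with (Rpower xi (g - 1)) by (field; auto).
  destruct (ratio2 xi (INR m) (g - 1) ltac:(lra) ltac:(lra)) as [H1 _]. auto. Qed.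

Lemma sum_tele g n n' : g <> 0 -> (1 <= n <= n')%nat ->
  sum1 n' (fun m => Rpower (INR m) (g - 1)) - sum1 n (fun m => Rpower (INR m) (g - 1))
   <= Rpower 2 (Rabs (g - 1)) * ((Rpower (INR n') g - Rpower (INR n) g) / g).
Proof. intros Hg [Hn Hn']. induction Hn'.
  - unfold Rminus at 1. rewrite Rplus_opp_r, Rminus_diag. unfold Rdiv. rewrite Rmult_0_l, Rmult_0_r. lra.
  - cbn [sum1]. pose proof (pow_tele g (S m) Hg ltac:(lia)). replace (S m - 1)%nat with m in H by lia.
    assert (forall a b c, a * ((b - c) / g) = a * (b / g) - a * (c / g)) as Hd by (intros; field; auto).
    rewrite Hd in *. lra. Qed.

Lemma nat_above X : exists N, X <= INR N.
Proof. destruct (archimed X) as [H1 H2]. exists (Z.to_nat (up X)).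
  destruct (Z_le_gt_dec 0 (up X)). rewrite INR_IZR_INZ, Z2Nat.id by auto. set (r := IZR (up X)) in *. lra.
  replace (Z.to_nat (up X)) with 0%nat by lia. simpl. assert (up X <= -1)%Z by lia. apply IZR_le in H. set (r := IZR (up X)) in *. lra. Qed.

Lemma extract (u b : nat -> R) n0 :
  (forall n m, (n0 <= n <= m)%nat -> Rabs (u m - u n) <= b n) ->
  (forall eta, 0 < eta -> exists N, forall n, (N <= n)%nat -> b n <= eta) ->
  exists c, forall n, (n0 <= n)%nat -> Rabs (u n - c) <= b n.
Proof. intros Hu Hb.
  assert (Cauchy_crit u) as Hc.
  { intros eta Heta. destruct (Hb (eta / 2) ltac:(lra)) as [N HN]. exists (max N n0). intros n m Hn Hm.
    unfold Rdist. destruct (Nat.le_ge_cases n m).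
    - rewrite Rabs_minus_sym. specialize (Hu n m ltac:(lia)). specialize (HN n ltac:(lia)). lra.
    - specialize (Hu m n ltac:(lia)). specialize (HN m ltac:(lia)). lra. }
  destruct (R_complete u Hc) as [c Hcv]. exists c. intros n Hn. apply Rle_plus_epsilon. intros eta Heta.
  destruct (Hcv eta Heta) as [N HN]. specialize (HN (max N n) ltac:(lia)). unfold Rdist in HN.
  specialize (Hu n (max N n) ltac:(lia)).
  replace (u n - c) with ((u (max N n) - c) - (u (max N n) - u n)) by ring.
  eapply Rle_trans. apply Rabs_triang. rewrite Rabs_Ropp. lra. Qed.

Lemma extract_real (Phi B : R -> R) x0 :
  (forall x y, x0 <= x <= y -> Rabs (Phi y - Phi x) <= B x) ->
  (forall eta, 0 < eta -> exists X, forall x, X <= x -> B x <= eta) ->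
  0 <= x0 ->
  exists c, forall x, x0 <= x -> Rabs (Phi x - c) <= B x.
Proof. intros HP HB Hx0.
  destruct (extract (fun n => Phi (x0 + INR n)) (fun n => B (x0 + INR n)) 0) as [c Hc].
  { intros n m Hnm. apply HP. split. pose proof (pos_INR n); lra. apply Rplus_le_compat_l, le_INR; lia. }
  { intros eta Heta. destruct (HB eta Heta) as [X HX]. destruct (nat_above X) as [N HN]. exists N.
    intros n Hn. apply HX. apply le_INR in Hn. pose proof (pos_INR N). lra. }
  exists c. intros x Hx. apply Rle_plus_epsilon. intros eta Heta.
  destruct (HB eta Heta) as [X HX]. destruct (nat_above (Rmax X x)) as [N HN].
  pose proof (Rmax_l X x). pose proof (Rmax_r X x). pose proof (pos_INR N).
  specialize (Hc N ltac:(lia)). specialize (HX (x0 + INR N) ltac:(lra)).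
  specialize (HP x (x0 + INR N) ltac:(lra)).
  replace (Phi x - c) with ((Phi (x0 + INR N) - c) - (Phi (x0 + INR N) - Phi x)) by ring.
  eapply Rle_trans. apply Rabs_triang. rewrite Rabs_Ropp. lra. Qed.

Lemma rpow_small g K : g < 0 -> forall eta, 0 < eta -> exists X, 1 <= X /\ forall x, X <= x -> K * Rpower x g <= eta.
Proof. intros Hg eta Heta. destruct (Rle_dec K 0) as [HK|HK].
  - exists 1. split; [lra|]. intros x Hx. pose proof (Rp_pos x g). nra.
  - set (X := Rmax 1 (Rpower (eta / K) (/ g))). exists X. split. apply Rmax_l. intros x Hx.
    pose proof (Rmax_l 1 (Rpower (eta / K) (/ g))). pose proof (Rmax_r 1 (Rpower (eta / K) (/ g))).
    assert (Rpower x g <= Rpower (Rpower (eta / K) (/ g)) g).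
    { apply Rp_anti_base. lra. split. apply Rp_pos. unfold X in Hx; lra. }
    rewrite Rp_Rp, Rinv_l, Rpower_1 in H1 by (lra || (apply Rdiv_lt_0_compat; lra)).
    apply Rmult_le_reg_r with (/ K). apply Rinv_0_lt_compat; lra.
    rewrite Rmult_comm, <- Rmult_assoc, Rinv_l, Rmult_1_l by lra. auto. Qed.

Definition Dn g (n : nat) := Dfun g (INR n).

Lemma D_int g : exists c K, 0 <= K /\ (0 <= g -> c = 0) /\
  forall n, (1 <= n)%nat -> Rabs (Dn g n - c) <= K * Rpower (INR n) g.
Proof.
  set (A := Rabs g * Rpower 2 (Rabs (g - 1))).
  assert (HA : 0 <= A) by (unfold A; pose proof (Rabs_pos g); pose proof (Rp_pos 2 (Rabs (g - 1))); nra).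
  assert (Hdiff : forall n m, (1 <= n <= m)%nat -> Rabs (Dn g m - Dn g n) <=
     A * (sum1 m (fun k => Rpower (INR k) (g - 1)) - sum1 n (fun k => Rpower (INR k) (g - 1)))).
  { intros n m [Hn Hm]. induction Hm.
    - unfold Rminus. rewrite !Rplus_opp_r, Rabs_R0, Rmult_0_r. lra.
    - pose proof (D_step g m ltac:(lia)). fold A in H. unfold Dn in *. cbn [sum1].
      replace (Dfun g (INR (S m)) - Dfun g (INR n)) with ((Dfun g (INR (S m)) - Dfun g (INR m)) + (Dfun g (INR m) - Dfun g (INR n))) by ring.
      eapply Rle_trans. apply Rabs_triang. lra. }
  destruct (Req_dec g 0) as [Hg0|Hg0].
  - exists 0, 0. split; [lra|]. split; auto. intros n Hn.
    specialize (Hdiff 1%nat n ltac:(lia)). unfold A in Hdiff. rewrite Hg0, Rabs_R0 in Hdiff.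
    assert (HD1 : Dn g 1 = 0).
    { unfold Dn, Dfun. rewrite sum_le_INR. simpl. rewrite Rp_one. unfold Mfun. rewrite Hg0.
      destruct (Req_EM_T 0 (-1)). lra. rewrite Rp_one. field. }
    subst g. rewrite HD1 in Hdiff. rewrite Rminus_0_r. rewrite Rmult_0_l, Rmult_0_l in Hdiff. rewrite Rmult_0_l. rewrite Rminus_0_r in Hdiff. auto.
  - set (A2 := A * Rpower 2 (Rabs (g - 1))).
    assert (HA2 : 0 <= A2) by (unfold A2; pose proof (Rp_pos 2 (Rabs (g - 1))); nra).
    assert (Hd2 : forall n m, (1 <= n <= m)%nat -> Rabs (Dn g m - Dn g n) <= A2 * ((Rpower (INR m) g - Rpower (INR n) g) / g)).
    { intros n m Hnm. eapply Rle_trans. apply Hdiff; auto. unfold A2. rewrite Rmult_assoc.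
      apply Rmult_le_compat_l; auto. apply sum_tele; auto. }
    destruct (Rle_dec 0 g) as [Hgp|Hgn].
    + exists 0, (Rabs (Dn g 1) + A2 / g).
      assert (0 < / g) by (apply Rinv_0_lt_compat; lra).
      split. pose proof (Rabs_pos (Dn g 1)). assert (0 <= A2 / g) by (apply Rmult_le_pos; lra). lra.
      split; auto. intros n Hn. specialize (Hd2 1%nat n ltac:(lia)).
      rewrite Rminus_0_r. simpl INR in Hd2. rewrite Rp_one in Hd2.
      assert (H1n : 1 <= Rpower (INR n) g) by (apply Rp_ge1; auto; apply (le_INR 1); auto).
      replace (Dn g n) with (Dn g 1 + (Dn g n - Dn g 1)) by ring.
      eapply Rle_trans. apply Rabs_triang.
      assert (A2 * ((Rpower (INR n) g - 1) / g) <= A2 / g * Rpower (INR n) g).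
      { unfold Rdiv. rewrite (Rmult_comm (Rpower (INR n) g - 1)), <- Rmult_assoc.
        apply Rmult_le_compat_l. apply Rmult_le_pos; lra. lra. }
      pose proof (Rabs_pos (Dn g 1)).
      assert (Rabs (Dn g 1) <= Rabs (Dn g 1) * Rpower (INR n) g) by nra. nra.
    + set (K := A2 / - g).
      assert (HK : 0 <= K) by (unfold K; apply Rmult_le_pos; auto; apply Rlt_le, Rinv_0_lt_compat; lra).
      destruct (extract (Dn g) (fun n => K * Rpower (INR n) g) 1) as [c Hc].
      { intros n m Hnm. eapply Rle_trans. apply Hd2; auto. unfold K.
        assert (Rpower (INR m) g - Rpower (INR n) g <= 0).
        { assert (Rpower (INR m) g <= Rpower (INR n) g). apply Rp_anti_base. lra. split.
          apply lt_0_INR; lia. apply le_INR; lia. lra. }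
        pose proof (Rp_pos (INR m) g).
        replace (A2 * ((Rpower (INR m) g - Rpower (INR n) g) / g)) with (A2 / - g * (Rpower (INR n) g - Rpower (INR m) g)) by (field; lra).
        apply Rmult_le_compat_l. apply Rmult_le_pos; auto. apply Rlt_le, Rinv_0_lt_compat; lra. lra. }
      { intros eta Heta. destruct (rpow_small g K ltac:(lra) eta Heta) as [X [HX1 HX]].
        destruct (nat_above X) as [N HN]. exists N. intros n Hn. apply HX. apply le_INR in Hn. lra. }
      exists c, K. split; auto. split; [intros; lra|]. auto. Qed.

Lemma D_real g : exists c K, 0 <= K /\ (0 <= g -> c = 0) /\
  forall t, 1 <= t -> Rabs (Dfun g t - c) <= K * Rpower t g.
Proof. destruct (D_int g) as [c [K0 [HK0 [Hc HD]]]].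
  set (P := Rpower 2 (Rabs g)). assert (HP : 1 <= P) by (apply Rp_ge1; [lra| apply Rabs_pos]).
  exists c, ((K0 + P) * P). split. nra. split; auto. intros t Ht.
  pose proof (floorN_spec t ltac:(lra)) as [H1 H2]. pose proof (floorN_ge1 t Ht) as Hn.
  set (n := floorN t) in *. assert (HnR : 1 <= INR n) by (apply (le_INR 1); auto).
  specialize (HD n Hn). unfold Dn in HD.
  replace (Dfun g t - c) with ((Dfun g (INR n) - c) - (Mfun g t - Mfun g (INR n))).
  2:{ unfold Dfun. rewrite sum_le_INR, sum_le_floor. fold n. ring. }
  pose proof (M_diff_bound g (INR n) t ltac:(lra) ltac:(lra)). fold P in H.
  destruct (ratio2 (INR n) t g ltac:(lra) ltac:(lra)) as [_ Hr]. fold P in Hr.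
  pose proof (Rp_pos (INR n) g). pose proof (Rp_pos t g).
  assert (P * Rpower (INR n) g * (t - INR n) <= P * Rpower (INR n) g * 1) by (apply Rmult_le_compat_l; nra).
  eapply Rle_trans. apply Rabs_triang. rewrite Rabs_Ropp.
  assert ((K0 + P) * Rpower (INR n) g <= (K0 + P) * (P * Rpower t g)) by (apply Rmult_le_compat_l; lra).
  nra. Qed.

Lemma Rt_bound g : exists c K, 0 <= K /\ (0 <= g -> c = 0) /\
  forall t eps, 0 < t -> 0 <= eps <= 1/2 ->
  Rabs (Dfun g t - (if Rle_dec 1 t then c else 0)) <= K * Rpower t (g + eps).
Proof. destruct (D_real g) as [c [K0 [HK0 [Hc HD]]]].
  exists c, (K0 + 2 + / Rabs (g + 1)).
  assert (Hi : 0 <= / Rabs (g + 1)).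
  { destruct (Req_dec (g + 1) 0) as [E|E]. rewrite E, Rabs_R0, Rinv_0. lra.
    apply Rlt_le, Rinv_0_lt_compat, Rabs_pos_lt; auto. }
  split. lra. split; auto. intros t eps Ht Heps.
  pose proof (Rp_pos t (g + eps)) as Hpe.
  destruct (Rle_dec 1 t) as [H1|H1].
  - specialize (HD t H1). assert (Rpower t g <= Rpower t (g + eps)) by (apply Rp_mono_exp; lra).
    assert (K0 * Rpower t g <= K0 * Rpower t (g + eps)) by (apply Rmult_le_compat_l; lra). nra.
  - unfold Dfun. rewrite sum_le_floor, floorN_small by lra. simpl sum1. rewrite Rminus_0_r, Rminus_0_l, Rabs_Ropp.
    unfold Mfun. destruct (Req_EM_T g (-1)) as [Eg|Eg].
    + subst g. rewrite Rabs_left1. 2:{ rewrite <- ln_1. apply ln_le; lra. }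
      assert (Hl : - ln t = ln (/ t)) by (rewrite ln_Rinv; auto).
      pose proof (ln_le_pow (/ t) (1/2) ltac:(apply Rmult_le_reg_r with t; [lra|]; rewrite Rinv_l; lra) ltac:(lra)).
      rewrite Rp_inv in H by auto. rewrite <- Rp_opp in H.
      assert (Rpower t (- (1/2)) <= Rpower t (-1 + eps)) by (apply Rp_anti_exp; lra).
      assert (0 <= K0 * Rpower t (-1 + eps)) by nra.
      assert (0 <= / Rabs (-1 + 1) * Rpower t (-1 + eps)) by nra.
      replace (Rpower t (- (1 / 2)) / (1 / 2)) with (2 * Rpower t (- (1/2))) in H by field. nra.
    + assert (Hg1 : g + 1 <> 0) by (intro; apply Eg; lra).
      unfold Rdiv. rewrite Rabs_mult, Rabs_Rinv by auto. rewrite (Rabs_right (Rpower t (g + 1))) by (apply Rle_ge, Rlt_le, Rp_pos).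
      assert (Rpower t (g + 1) <= Rpower t (g + eps)) by (apply Rp_anti_exp; lra).
      assert (0 <= K0 * Rpower t (g + eps)) by nra.
      assert (Rpower t (g + 1) * / Rabs (g + 1) <= / Rabs (g + 1) * Rpower t (g + eps)).
      { rewrite Rmult_comm. apply Rmult_le_compat_l; auto. }
      nra. Qed.

Definition Sx (e : list Z) (beta x : R) := sum_le x (fun n => JordanQ e n * Rpower (INR n) beta).

Lemma JQ_GE e beta n : (1 <= n)%nat ->
  JordanQ e n * Rpower (INR n) beta = GE e n * Rpower (INR n) (beta + IZR (weight e)).
Proof. intros Hn. assert (Hx : 0 < INR n) by (apply lt_0_INR; lia). unfold GE.
  rewrite powerRZ_Rpower, opp_IZR by auto. rewrite Rp_plus.
  replace (JordanQ e n * Rpower (INR n) (- IZR (weight e)) * (Rpower (INR n) beta * Rpower (INR n) (IZR (weight e))))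
   with (JordanQ e n * Rpower (INR n) beta * (Rpower (INR n) (- IZR (weight e)) * Rpower (INR n) (IZR (weight e)))) by ring.
  rewrite <- Rp_plus, Rplus_opp_l, Rp_0 by auto. ring. Qed.

Lemma Sx_SS e beta x N : 0 <= x -> (floorN x <= N)%nat ->
  Sx e beta x = SS (Qs N) (fun S => HS e S * Rpower (INR (prodn S)) (beta + IZR (weight e)) *
      sum_le (x / INR (prodn S)) (fun m => Rpower (INR m) (beta + IZR (weight e)))).
Proof. intros Hx HN. unfold Sx. rewrite sum_le_floor.
  rewrite (sum1_ext _ _ (fun n => GE e n * Rpower (INR n) (beta + IZR (weight e)))) by (intros; apply JQ_GE; lia).
  rewrite (sum_expand e (floorN x) N) by (auto; intros a b Ha Hb; rewrite mult_INR, Rp_mult; auto; apply lt_0_INR; lia).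
  apply SS_ext. intros S HSub. f_equal. rewrite sum_le_floor, floorN_div; auto. eapply sub_Qs_d; eauto. Qed.

Definition Lterm (g d : R) := if Req_EM_T g (-1) then ln d / d else 0.

Lemma M_scale g x d : 0 < x -> 0 < d -> Rpower d g * Mfun g (x / d) = Mfun g x / d - Lterm g d.
Proof. intros Hx Hd. unfold Mfun, Lterm. destruct (Req_EM_T g (-1)) as [->|Hg].
  - replace (-1) with (Ropp 1) by ring. rewrite Rp_opp, Rp_1 by auto. unfold Rdiv. rewrite ln_mult, ln_Rinv; auto.
    field; lra. apply Rinv_0_lt_compat; auto.
  - assert (g + 1 <> 0) by (intro; apply Hg; lra). rewrite Rp_div by auto. rewrite Rp_plus, Rp_1 by auto.
    rewrite Rp_plus, Rp_1 by auto. pose proof (Rp_pos d g). field. split; auto. split; lra. Qed.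

Lemma pointwise g c K0 x d eps h : 1 <= x -> 1 <= d -> 0 <= K0 -> 0 < eps <= 1/2 ->
  (c <> 0 -> g + eps <= 0) ->
  (forall t, 0 < t -> Rabs (Dfun g t - (if Rle_dec 1 t then c else 0)) <= K0 * Rpower t (g + eps)) ->
  Rabs (h * Rpower d g * sum_le (x / d) (fun m => Rpower (INR m) g) - Mfun g x * (h / d) - h * (c * Rpower d g - Lterm g d))
   <= (K0 + Rabs c) * Rpower x (g + eps) * (Rabs h * Rpower d (- eps)).
Proof. intros Hx Hd HK0 Heps Hc HR.
  assert (Hxd : 0 < x / d) by (apply Rdiv_lt_0_compat; lra).
  assert (Hs : sum_le (x / d) (fun m => Rpower (INR m) g) = Dfun g (x / d) + Mfun g (x / d)) by (unfold Dfun; ring).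
  rewrite Hs.
  replace (h * Rpower d g * (Dfun g (x / d) + Mfun g (x / d)) - Mfun g x * (h / d) - h * (c * Rpower d g - Lterm g d))
    with (h * Rpower d g * (Dfun g (x / d) - c) + h * (Rpower d g * Mfun g (x / d) - (Mfun g x / d - Lterm g d))) by (field; lra).
  rewrite M_scale by lra. rewrite Rminus_diag, Rmult_0_r, Rplus_0_r.
  rewrite !Rabs_mult. rewrite (Rabs_right (Rpower d g)) by (apply Rle_ge, Rlt_le, Rp_pos).
  pose proof (Rabs_pos h). pose proof (Rp_pos d g). pose proof (Rp_pos d (- eps)). pose proof (Rp_pos x (g + eps)).
  assert (Hkey : Rabs (Dfun g (x / d) - c) * Rpower d g <= (K0 + Rabs c) * Rpower x (g + eps) * Rpower d (- eps)).
  { replace (Dfun g (x / d) - c) with ((Dfun g (x / d) - (if Rle_dec 1 (x / d) then c else 0)) + ((if Rle_dec 1 (x / d) then c else 0) - c)) by ring.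
    assert (E1 : Rpower (x / d) (g + eps) * Rpower d g = Rpower x (g + eps) * Rpower d (- eps)).
    { rewrite Rp_div by lra. unfold Rdiv. rewrite Rmult_assoc. f_equal.
      replace g with ((g + eps) + - eps) at 2 by ring. rewrite (Rp_plus d (g + eps) (- eps)). field. apply Rgt_not_eq, Rp_pos. }
    assert (B1 : Rabs (Dfun g (x / d) - (if Rle_dec 1 (x / d) then c else 0)) * Rpower d g <= K0 * (Rpower x (g + eps) * Rpower d (- eps))).
    { rewrite <- E1, <- Rmult_assoc. apply Rmult_le_compat_r; auto. lra. }
    assert (B2 : Rabs ((if Rle_dec 1 (x / d) then c else 0) - c) * Rpower d g <= Rabs c * (Rpower x (g + eps) * Rpower d (- eps))).
    { destruct (Rle_dec 1 (x / d)) as [Hle|Hle].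
      - rewrite Rminus_diag, Rabs_R0, Rmult_0_l. apply Rmult_le_pos; [apply Rabs_pos| apply Rmult_le_pos; lra].
      - rewrite Rminus_0_l, Rabs_Ropp. destruct (Req_dec c 0) as [E|E].
        + rewrite E, Rabs_R0. lra.
        + specialize (Hc E). apply Rmult_le_compat_l. apply Rabs_pos.
          assert (Hxd1 : x <= d). { apply Rnot_le_lt in Hle. apply Rmult_lt_compat_r with (r := d) in Hle; [|lra].
            unfold Rdiv in Hle. rewrite Rmult_assoc, Rinv_l, Rmult_1_l, Rmult_1_r in Hle by lra. lra. }
          replace (Rpower d g) with (Rpower d (g + eps) * Rpower d (- eps)) by (rewrite <- Rp_plus; f_equal; ring).
          apply Rmult_le_compat_r. lra. apply Rp_anti_base; lra. }
    eapply Rle_trans. apply Rmult_le_compat_r. lra. apply Rabs_triang. lra. }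
  replace (Rabs h * Rpower d g * Rabs (Dfun g (x / d) - c)) with (Rabs h * (Rabs (Dfun g (x / d) - c) * Rpower d g)) by ring.
  apply Rle_trans with (Rabs h * ((K0 + Rabs c) * Rpower x (g + eps) * Rpower d (- eps))).
  apply Rmult_le_compat_l; auto. right; ring. Qed.

Lemma MAIN e beta : let g := beta + IZR (weight e) in let a := Z.abs_nat (ecoef e 1) in
  exists K (Z : nat -> R), 0 <= K /\ (0 <= g -> forall N, Z N = 0) /\
  forall x N eps, 1 <= x -> (floorN x <= N)%nat -> 0 < eps <= 1/2 -> (g < 0 -> g + eps <= 0) ->
  Rabs (Sx e beta x - SingPartial e N * Mfun g x - Z N) <= K * Rpower x (g + eps) / eps ^ a.
Proof. intros g a. destruct (Rt_bound g) as [c [K0 [HK0 [Hc HR]]]].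
  destruct (KEY e) as [K1 [HK1 HKEY]]. fold a in HKEY.
  exists ((K0 + Rabs c) * K1), (fun N => SS (Qs N) (fun S => HS e S * (c * Rpower (INR (prodn S)) g - Lterm g (INR (prodn S))))).
  split. pose proof (Rabs_pos c). nra. split.
  { intros Hg N. rewrite (SS_ext _ _ (fun _ => 0)). clear. induction (Qs N); simpl; auto. rewrite IHl; lra.
    intros S _. rewrite Hc by auto. unfold Lterm. destruct (Req_EM_T g (-1)); [lra|]. ring. }
  intros x N eps Hx HN Heps Hge.
  rewrite (Sx_SS e beta x N) by (lra || auto). rewrite SP_SS. fold g.
  rewrite (Rmult_comm (SS _ _) (Mfun g x)), <- SS_scal, <- !SS_minus.
  eapply Rle_trans. apply SS_abs.
  assert (Hcimp : c <> 0 -> g + eps <= 0).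
  { intros Hc0. apply Hge. destruct (Rlt_dec g 0); auto. exfalso; apply Hc0, Hc; lra. }
  assert (HRt : forall t, 0 < t -> Rabs (Dfun g t - (if Rle_dec 1 t then c else 0)) <= K0 * Rpower t (g + eps))
    by (intros; apply HR; auto; lra).
  eapply Rle_trans. apply SS_le. intros S HSub.
  apply (pointwise g c K0 x (INR (prodn S)) eps (HS e S) Hx ltac:(apply (le_INR 1); eapply sub_Qs_d; eauto) HK0 Heps Hcimp HRt).
  rewrite SS_scal, <- P_SS. specialize (HKEY eps N ltac:(lra)).
  pose proof (Rp_pos x (g + eps)). pose proof (Rabs_pos c).
  unfold Rdiv in *.
  replace ((K0 + Rabs c) * K1 * Rpower x (g + eps) * / eps ^ a) with ((K0 + Rabs c) * Rpower x (g + eps) * (K1 * / eps ^ a)) by ring.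
  apply Rmult_le_compat_l; auto. apply Rmult_le_pos; lra. Qed.

Lemma lim_affine (u : nat -> R) l al be R0 N0 : Un_cv u l ->
  (forall N, (N0 <= N)%nat -> Rabs (al + be * u N) <= R0) -> Rabs (al + be * l) <= R0.
Proof. intros Hu H. apply Rle_plus_epsilon. intros eta Heta.
  destruct (Hu (eta / (Rabs be + 1))) as [N HN]. apply Rdiv_lt_0_compat; [lra| pose proof (Rabs_pos be); lra].
  specialize (HN (max N N0) ltac:(lia)). specialize (H (max N N0) ltac:(lia)). unfold Rdist in HN.
  replace (al + be * l) with ((al + be * u (max N N0)) - be * (u (max N N0) - l)) by ring.
  eapply Rle_trans. apply Rabs_triang. rewrite Rabs_Ropp, Rabs_mult.
  assert (Rabs be * Rabs (u (max N N0) - l) <= eta).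
  { pose proof (Rabs_pos be). pose proof (Rabs_pos (u (max N N0) - l)).
    apply Rle_trans with ((Rabs be + 1) * (eta / (Rabs be + 1))). nra. right; field; lra. }
  lra. Qed.

Lemma eps_choice g a : exists K3, 0 <= K3 /\ forall x, 2 <= x -> exists eps, 0 < eps <= 1/2 /\ (g < 0 -> g + eps <= 0) /\
  Rpower x (g + eps) / eps ^ a <= K3 * Rpower x g * ln x ^ a.
Proof. set (m0 := if Rlt_dec g 0 then - g else 1).
  assert (Hm0 : 0 < m0) by (unfold m0; destruct (Rlt_dec g 0); lra).
  set (C := 5 + 2 / m0). assert (HC : 5 <= C) by (unfold C; assert (0 < 2 / m0) by (apply Rdiv_lt_0_compat; lra); lra).
  exists (3 * C ^ a). split. apply Rmult_le_pos. lra. apply pow_le; lra.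
  intros x Hx. assert (Hl : / 2 < ln x) by (pose proof ln_lt_2; pose proof (ln_le 2 x ltac:(lra) Hx); lra).
  set (eps := Rmin (1/2) (Rmin (/ ln x) m0)).
  set (e0 := / (C * ln x)).
  assert (He0 : 0 < e0) by (unfold e0; apply Rinv_0_lt_compat; nra).
  assert (He0e : e0 <= eps).
  { unfold eps. apply Rmin_glb; [|apply Rmin_glb]; unfold e0.
    - replace (1/2) with (/ 2) by field. apply Rinv_le_contravar. lra. nra.
    - apply Rinv_le_contravar. lra. nra.
    - rewrite <- (Rinv_inv m0). apply Rinv_le_contravar. apply Rinv_0_lt_compat; lra.
      assert (/ m0 <= C * / 2). { unfold C. unfold Rdiv. nra. }
      assert (C * / 2 <= C * ln x) by (apply Rmult_le_compat_l; lra). lra. }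
  exists eps. split; [split; [lra| apply Rmin_l]|]. split.
  { intros Hg. assert (eps <= m0) by (unfold eps; eapply Rle_trans; [apply Rmin_r| apply Rmin_r]).
    unfold m0 in H. destruct (Rlt_dec g 0); lra. }
  assert (Hxe : Rpower x eps <= 3).
  { unfold Rpower. eapply Rle_trans; [|apply exp_le_3]. apply exp_le.
    assert (eps <= / ln x) by (unfold eps; eapply Rle_trans; [apply Rmin_r| apply Rmin_l]).
    apply Rmult_le_compat_r with (r := ln x) in H; [|lra]. rewrite Rinv_l in H by lra. lra. }
  rewrite Rp_plus. pose proof (Rp_pos x g). pose proof (Rp_pos x eps).
  assert (Hea : / eps ^ a <= C ^ a * ln x ^ a).
  { rewrite <- Rpow_mult_distr. rewrite <- (Rinv_inv (C * ln x)). fold e0. rewrite pow_inv.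
    apply Rinv_le_contravar. apply pow_lt; auto. apply pow_incr; lra. }
  assert (0 <= / eps ^ a) by (apply Rlt_le, Rinv_0_lt_compat, pow_lt; lra).
  unfold Rdiv. replace (3 * C ^ a * Rpower x g * ln x ^ a) with (Rpower x g * 3 * (C ^ a * ln x ^ a)) by ring.
  rewrite !Rmult_assoc. apply Rmult_le_compat_l. lra. apply Rmult_le_compat; lra. Qed.

Lemma decay g a K : g < 0 -> forall eta, 0 < eta -> exists X, forall x, X <= x -> K * Rpower x g * ln x ^ a <= eta.
Proof. intros Hg eta Heta. set (d := - g / (2 * (INR a + 1))).
  assert (Hd : 0 < d) by (unfold d; apply Rdiv_lt_0_compat; pose proof (pos_INR a); lra).
  destruct (rpow_small (g / 2) (Rabs K / d ^ a) ltac:(lra) eta Heta) as [X [HX1 HX]].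
  exists X. intros x Hx. specialize (HX x Hx).
  assert (Hln : 0 <= ln x) by (apply ln_nonneg; lra).
  assert (H1 : ln x ^ a <= Rpower x (d * INR a) / d ^ a).
  { rewrite <- Rp_Rp, Rpower_pow by (apply Rp_pos || lra). unfold Rdiv. rewrite <- pow_inv, <- Rpow_mult_distr.
    apply pow_incr. split; auto. apply ln_le_pow; lra. }
  assert (H2 : Rpower x g * Rpower x (d * INR a) <= Rpower x (g / 2)).
  { rewrite <- Rp_plus. apply Rp_mono_exp. lra. unfold d.
    rewrite Rmult_comm. assert (INR a * (- g / (2 * (INR a + 1))) <= - g / 2).
    { pose proof (pos_INR a). unfold Rdiv. rewrite Rinv_mult.
      assert (INR a * / (INR a + 1) <= 1). { apply Rmult_le_reg_r with (INR a + 1); [lra|]. rewrite Rmult_assoc, Rinv_l; lra. }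
      assert (0 < - g * / 2) by lra. nra. }
    lra. }
  apply Rle_trans with (Rabs K * Rpower x g * ln x ^ a).
  { apply Rmult_le_compat_r. apply pow_le; auto. apply Rmult_le_compat_r. apply Rlt_le, Rp_pos. apply Rle_abs. }
  pose proof (Rabs_pos K). pose proof (Rp_pos x g). pose proof (pow_lt d a Hd).
  apply Rle_trans with (Rabs K / d ^ a * Rpower x (g / 2)); auto.
  apply Rle_trans with (Rabs K * Rpower x g * (Rpower x (d * INR a) / d ^ a)).
  apply Rmult_le_compat_l; nra.
  unfold Rdiv. replace (Rabs K * Rpower x g * (Rpower x (d * INR a) * / d ^ a)) with (Rabs K * / d ^ a * (Rpower x g * Rpower x (d * INR a))) by ring.
  apply Rmult_le_compat_l; auto. apply Rmult_le_pos; auto. apply Rlt_le, Rinv_0_lt_compat; auto. Qed.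

Theorem mainTheorem5 (e : list Z) (beta : R) (Se : R)
  (HSe : Un_cv (SingPartial e) Se) :
  exists C K : R, forall x : R, 2 <= x ->
    Rabs (sum_le x (fun n => JordanQ e n * Rpower (INR n) beta)
          - Se * Mfun (beta + IZR (weight e)) x - C)
    <= K * Rpower x (beta + IZR (weight e)) * ln x ^ Z.abs_nat (ecoef e 1).
Proof.
  destruct (MAIN e beta) as [K [Zf [HK [HZ HM]]]].
  set (g := beta + IZR (weight e)) in *. set (a := Z.abs_nat (ecoef e 1)) in *.
  destruct (eps_choice g a) as [K3 [HK3 Heps]].
  destruct (Rle_dec 0 g) as [Hg|Hg].
  - exists 0, (K * K3). intros x Hx. destruct (Heps x Hx) as [eps [He1 [He2 He3]]].
    rewrite Rminus_0_r. change (sum_le x (fun n => JordanQ e n * Rpower (INR n) beta)) with (Sx e beta x).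
    replace (Sx e beta x - Se * Mfun g x) with (Sx e beta x + - Mfun g x * Se) by ring.
    apply (lim_affine (SingPartial e) Se _ _ _ (floorN x) HSe). intros N HN.
    replace (Sx e beta x + - Mfun g x * SingPartial e N) with (Sx e beta x - SingPartial e N * Mfun g x - Zf N)
      by (rewrite HZ by auto; ring).
    eapply Rle_trans. apply HM; auto; lra.
    replace (K * K3 * Rpower x g * ln x ^ a) with (K * (K3 * Rpower x g * ln x ^ a)) by ring.
    unfold Rdiv in *. rewrite Rmult_assoc. apply Rmult_le_compat_l; auto.
  - apply Rnot_le_lt in Hg.
    set (Phi := fun x => Sx e beta x - Se * Mfun g x).
    set (B := fun x => 2 * K * K3 * Rpower x g * ln x ^ a).
    destruct (extract_real Phi B 2) as [C HC].
    { intros x y Hxy. destruct (Heps x ltac:(lra)) as [eps [He1 [He2 He3]]]. specialize (He2 Hg).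
      unfold Phi, B.
      replace (Sx e beta y - Se * Mfun g y - (Sx e beta x - Se * Mfun g x)) with
        ((Sx e beta y - Sx e beta x) + (Mfun g x - Mfun g y) * Se) by ring.
      apply (lim_affine (SingPartial e) Se _ _ _ (max (floorN x) (floorN y)) HSe). intros N HN.
      replace (Sx e beta y - Sx e beta x + (Mfun g x - Mfun g y) * SingPartial e N) with
        ((Sx e beta y - SingPartial e N * Mfun g y - Zf N) - (Sx e beta x - SingPartial e N * Mfun g x - Zf N)) by ring.
      eapply Rle_trans. apply Rabs_triang. rewrite Rabs_Ropp.
      pose proof (HM y N eps ltac:(lra) ltac:(lia) He1 (fun _ => He2)) as H1.
      pose proof (HM x N eps ltac:(lra) ltac:(lia) He1 (fun _ => He2)) as H2.
      assert (Rpower y (g + eps) <= Rpower x (g + eps)) by (apply Rp_anti_base; lra).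
      assert (0 < / eps ^ a) by (apply Rinv_0_lt_compat, pow_lt; lra).
      assert (K * Rpower y (g + eps) / eps ^ a <= K * Rpower x (g + eps) / eps ^ a).
      { unfold Rdiv. apply Rmult_le_compat_r. lra. apply Rmult_le_compat_l; auto. }
      assert (K * Rpower x (g + eps) / eps ^ a <= K * (K3 * Rpower x g * ln x ^ a)).
      { unfold Rdiv in *. rewrite Rmult_assoc. apply Rmult_le_compat_l; auto. }
      lra. }
    { intros eta Heta. destruct (decay g a (2 * K * K3) Hg eta Heta) as [X HX]. exists X. intros x Hx. apply HX; auto. }
    lra.
    exists C, (2 * K * K3). intros x Hx. change (sum_le x (fun n => JordanQ e n * Rpower (INR n) beta)) with (Sx e beta x). apply HC; auto.
Qed.
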